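(* Let $\bullet\in\{0,L_p,L,1_p,1\}$ and let $\mathsf{S}$ be a $\bullet$-continuous kinematic system. Let $\mathbf{x}_0\in X\setminus\mathrm{int}(\mathcal{G}^\bullet_\mathsf{S})$. If $\mathbf{J}\in C^1_{\mathbf{x}_0}(X,\mathbb{R}^{m\times n})$ and $\mathsf{D}\mathbf{J}\in C^{L_p}_{\mathbf{x}_0}$, then there exist $a\in\{1,\dots,m\}$ and $r,L\in(0,\infty)$ such that (i) $c_{aa}(\mathbf{x}_0)=0$; (ii) $c_{aa}\hat{\mathbf{j}}_a^T\in C^{1_p}_{\mathbf{x}_0+rB_X}(X,\mathbb{R}^n)$; (iii) $\|\mathbf{h}(\mathbf{x})\|\le L\|\mathbf{x}-\mathbf{x}_0\|^2$ for all $\mathbf{x}\in\mathbf{x}_0+rB_X$, where $\mathbf{h}(\mathbf{x})=(c_{aa}\hat{\mathbf{j}}_a^T)(\mathbf{x})-\mathsf{D}(c_{aa}\hat{\mathbf{j}}_a^T)(\mathbf{x}_0)(\mathbf{x}-\mathbf{x}_0)$.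
   Context: Kinematic system: $l\ge2$, $m_1,\dots,m_l\ge1$, $m=\sum m_a\le n$; $X=\mathbb{R}\times\mathbb{R}^n$, $B_X$ its closed unit ball; $\mathbf{F}=[\mathbf{f}_t\ \mathbf{F}_q]:X\to\mathbb{R}^{m\times(n+1)}$, $\mathbf{R}:X\to$ invertible $n\times n$ matrices, $\mathbf{r}:X\to\mathbb{R}^m$; it is $\bullet$-continuous if $\mathbf{F},\mathbf{R},\mathbf{r}\in C^\bullet$ on $X$. $\mathbf{J}=\mathbf{F}_q\mathbf{R}^{-1}$. Orthogonalization: pointwise Gram–Schmidt on rows $\mathbf{j}_i$ of $\mathbf{J}$: $\mathbf{v}_i=\mathbf{j}_i-\sum_{k<i,c_{kk}>0}\langle\hat{\mathbf{j}}_k,\mathbf{j}_i\rangle\hat{\mathbf{j}}_k$, $c_{ii}=\|\mathbf{v}_i\|$, $\hat{\mathbf{j}}_i=\mathbf{v}_i/c_{ii}$ if $c_{ii}>0$, $c_{ik}=\langle\hat{\mathbf{j}}_k,\mathbf{j}_i\rangle$ for $k<i$ with $c_{kk}>0$, else $c_{ik}=0$; the other rows complete an orthonormal basis of the null space of $\mathbf{J}$ (note $c_{ii}\hat{\mathbf{j}}_i=\mathbf{v}_i$ regardless of these choices). $\mathbf{C}=[c_{ik}]_{i,k\le m}$, with diagonal blocks $\mathbf{C}_{aa}\in\mathbb{R}^{m_a\times m_a}$ (task blocks of sizes $m_1,\dots,m_l$), and $\hat{\mathbf{J}}_a$ the rows of $\hat{\mathbf{J}}_e$ with indices in the $a$-th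 task block. $\mathcal{G}^\bullet_\mathsf{S}=\{\mathbf{x}\in X:\mathbf{C}_{aa}\hat{\mathbf{J}}_a\in C^\bullet_\mathbf{x}\ \forall a\}$. Regularity classes: $f\in C^\bullet_{x_0}$ means ($0$) continuous at $x_0$; ($L_p$) $\exists r>0,L\ge0$: $\|f(x)-f(x_0)\|\le L\|x-x_0\|$ for $\|x-x_0\|\le r$; ($L$) Lipschitz near $x_0$; ($1_p$) Fréchet differentiable at $x_0$; ($1$) differentiable near $x_0$ with derivative continuous at $x_0$; $C^\bullet_\Omega$ = $\bullet$-continuous at every point of $\Omega$. $\mathsf{D}$ denotes the derivative. *)

(* Defs.v *)
From Stdlib Require Import Reals List.
From mathcomp Require Import ssreflect ssrfun ssrbool eqtype ssrnat seq choice fintype bigop.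
Set Implicit Arguments. Unset Strict Implicit. Unset Printing Implicit Defensive.

Local Open Scope R_scope.

Definition rsum (I : finType) (f : I -> R) : R := \big[Rplus/R0]_(i : I) f i.
Definition dot (I : finType) (u v : I -> R) : R := rsum (fun i => u i * v i).
Definition norm (I : finType) (u : I -> R) : R := sqrt (dot u u).
Definition vsub (I : finType) (u v : I -> R) : I -> R := fun i => u i - v i.

(* the state space X = R x R^n, represented as R^(n+1) (index 0 = time t),
   with the Euclidean norm *)
Definition X (n : nat) := 'I_n.+1 -> R.

Definition lapply (D C : finType) (A : C -> D -> R) (h : D -> R) : C -> R :=
  fun c => rsum (fun d => A c d * h d).

Inductive reg_class := C0 | CLp | CL | C1p | C1.

Definition frechet (D C : finType) (f : (D -> R) -> (C -> R)) (x : D -> R)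
    (A : C -> D -> R) : Prop :=
  forall eps, 0 < eps -> exists delta, 0 < delta /\
    forall y, norm (vsub y x) < delta ->
      norm (vsub (vsub (f y) (f x)) (lapply A (vsub y x))) <= eps * norm (vsub y x).

Definition cont_at (D C : finType) (f : (D -> R) -> (C -> R)) (x0 : D -> R) : Prop :=
  forall eps, 0 < eps -> exists delta, 0 < delta /\
    forall x, norm (vsub x x0) < delta -> norm (vsub (f x) (f x0)) < eps.

Definition reg_at (cls : reg_class) (D C : finType) (f : (D -> R) -> (C -> R))
    (x0 : D -> R) : Prop :=
  match cls with
  | C0 => cont_at f x0
  | CLp => exists r L, 0 < r /\ 0 <= L /\
      forall x, norm (vsub x x0) <= r -> norm (vsub (f x) (f x0)) <= L * norm (vsub x x0)
  | CL => exists r L, 0 < r /\ 0 <= L /\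
      forall x y, norm (vsub x x0) <= r -> norm (vsub y x0) <= r ->
        norm (vsub (f x) (f y)) <= L * norm (vsub x y)
  | C1p => exists A, frechet f x0 A
  | C1 => exists r (Df : (D -> R) -> C -> D -> R), 0 < r /\
      (forall x, norm (vsub x x0) < r -> frechet f x (Df x)) /\
      cont_at (fun x (p : C * D) => Df x p.1 p.2) x0
  end.

(* matrix-valued maps are viewed as vector-valued maps on the product index *)
Definition uncurry_map (D A B : finType) (f : (D -> R) -> A -> B -> R) :
  (D -> R) -> (A * B)%type -> R := fun x p => f x p.1 p.2.

(* rows are given as  row : nat -> 'I_n -> R  (row i = j_i, 0-based).
   Convention: hat k := 0 whenever c_kk = 0. *)
Definition normalize n (v : 'I_n -> R) : 'I_n -> R :=
  if Rlt_dec 0 (norm v) then fun c => v c / norm v else fun _ => 0.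

Definition gs_resid n (row : nat -> 'I_n -> R) (h : nat -> 'I_n -> R) (i : nat)
  : 'I_n -> R :=
  fun c => row i c - \big[Rplus/R0]_(k < i) (dot (h k) (row i) * h k c).

Fixpoint gs_hats n (row : nat -> 'I_n -> R) (i : nat) : nat -> 'I_n -> R :=
  match i with
  | O => fun _ _ => 0
  | S i' => let h := gs_hats row i' in
            let v := normalize (gs_resid row h i') in
            fun k => if (k == i')%N then v else h k
  end.

Definition jhat n (row : nat -> 'I_n -> R) (k : nat) : 'I_n -> R :=
  gs_hats row k.+1 k.
Definition vGS n (row : nat -> 'I_n -> R) (i : nat) : 'I_n -> R :=
  gs_resid row (gs_hats row i) i.
Definition cGS n (row : nat -> 'I_n -> R) (i k : nat) : R :=
  if (k < i)%N then dot (jhat row k) (row i)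
  else if (k == i)%N then norm (vGS row i) else 0.

(* rows of an m x n matrix, as a nat-indexed family (zero past m) *)
Definition rows_of m n (M : 'I_m -> 'I_n -> R) : nat -> 'I_n -> R :=
  fun i => match (insub i : option 'I_m) with
           | Some o => M o
           | None => fun _ => 0
           end.

Definition Fq m n (F : X n -> 'I_m -> 'I_n.+1 -> R) : X n -> 'I_m -> 'I_n -> R :=
  fun x i j => F x i (lift ord0 j).

Definition matmul p q s (A : 'I_p -> 'I_q -> R) (B : 'I_q -> 'I_s -> R) :
  'I_p -> 'I_s -> R := fun i j => rsum (fun k => A i k * B k j).

Definition idm p : 'I_p -> 'I_p -> R := fun i j => if i == j then 1 else 0.
Arguments idm : clear implicits.

(* J = F_q R^{-1};  Rinv is the (unique) inverse of R *)
Definition Jmat m n (F : X n -> 'I_m -> 'I_n.+1 -> R) (Rinv : X n -> 'I_n -> 'I_n -> R)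
  : X n -> 'I_m -> 'I_n -> R := fun x => matmul (Fq F x) (Rinv x).

(* tasks: block sizes ms = [m_1; ...; m_l]; block a (0-based) starts at offset *)
Definition blk_off (ms : list nat) (a : nat) : nat := list_sum (firstn a ms).
Definition blk_size (ms : list nat) (a : nat) : nat := nth a ms 0%N.

(* x |-> C_aa \hat J_a, as an m_a x n matrix (flattened) *)
Definition CJ_block m n (ms : list nat) (J : X n -> 'I_m -> 'I_n -> R) (a : nat)
  : X n -> ('I_(blk_size ms a) * 'I_n)%type -> R :=
  fun x p =>
    let row := rows_of (J x) in
    let o := blk_off ms a in
    rsum (fun k : 'I_(blk_size ms a) =>
            cGS row (o + p.1) (o + k) * jhat row (o + k) p.2).
Arguments CJ_block {m n} ms J a _ _.

Definition inG (cls : reg_class) m n (ms : list nat) (J : X n -> 'I_m -> 'I_n -> R)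
  (x : X n) : Prop :=
  forall a, (a < length ms)%N -> reg_at cls (CJ_block ms J a) x.

Definition in_interior n (P : X n -> Prop) (x0 : X n) : Prop :=
  exists r, 0 < r /\ forall x, norm (vsub x x0) < r -> P x.

Definition kin_cont (cls : reg_class) m n (F : X n -> 'I_m -> 'I_n.+1 -> R)
  (Rm : X n -> 'I_n -> 'I_n -> R) (r : X n -> 'I_m -> R) : Prop :=
  forall x, reg_at cls (uncurry_map F) x /\ reg_at cls (uncurry_map Rm) x /\
            reg_at cls r x.

(* Main.v *)
From HB Require Import structures.
Require Import Defs.
From Stdlib Require Import Reals List Lra Lia Psatz FunctionalExtensionality IndefiniteDescription Classical.
From mathcomp Require Import ssreflect ssrfun ssrbool eqtype ssrnat seq choice fintype bigop.
Local Open Scope R_scope.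
Set Implicit Arguments. Unset Strict Implicit.

Lemma Rplus_assoc' : associative Rplus. Proof. move=> *; ring. Qed.
Lemma Rmult_assoc' : associative Rmult. Proof. move=> *; ring. Qed.
HB.instance Definition _ := Monoid.isComLaw.Build R R0 Rplus Rplus_assoc' Rplus_comm Rplus_0_l.
HB.instance Definition _ := Monoid.isComLaw.Build R R1 Rmult Rmult_assoc' Rmult_comm Rmult_1_l.
HB.instance Definition _ := Monoid.isMulLaw.Build R R0 Rmult Rmult_0_l Rmult_0_r.
HB.instance Definition _ := Monoid.isAddLaw.Build R Rmult Rplus Rmult_plus_distr_r Rmult_plus_distr_l.

Section Sums.
Variable I : finType.
Implicit Types f g : I -> R.

Lemma rsum_le f g : (forall i, f i <= g i) -> rsum f <= rsum g.
Proof.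
move=> H; rewrite /rsum; apply: (big_ind2 (fun a b => a <= b)) => //.
- lra.
- by move=> ? ? ? ? ? ?; lra.
Qed.

Lemma rsum_ge0 f : (forall i, 0 <= f i) -> 0 <= rsum f.
Proof.
move=> H; rewrite /rsum; apply: (big_ind (fun a => 0 <= a)) => //.
- lra.
- by move=> ? ? ? ?; lra.
Qed.

Lemma rsum_add f g : rsum (fun i => f i + g i) = rsum f + rsum g.
Proof. by rewrite /rsum big_split. Qed.

Lemma rsum_scal c f : rsum (fun i => c * f i) = c * rsum f.
Proof. by rewrite /rsum big_distrr. Qed.

Lemma rsum_scalr c f : rsum (fun i => f i * c) = rsum f * c.
Proof. by rewrite /rsum big_distrl. Qed.

Lemma rsum_ext f g : (forall i, f i = g i) -> rsum f = rsum g.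
Proof. by move=> H; rewrite /rsum; apply: eq_bigr => i _. Qed.

Lemma rsum_opp f : rsum (fun i => - f i) = - rsum f.
Proof.
have -> : rsum (fun i => - f i) = rsum (fun i => -1 * f i) by apply: rsum_ext => i; ring.
rewrite rsum_scal; ring.
Qed.

Lemma rsum_sub f g : rsum (fun i => f i - g i) = rsum f - rsum g.
Proof.
rewrite /Rminus -rsum_opp -rsum_add //.
Qed.

Lemma rsum0 : rsum (fun _ : I => 0) = 0.
Proof. by rewrite /rsum big1. Qed.

Lemma rsum_abs f : Rabs (rsum f) <= rsum (fun i => Rabs (f i)).
Proof.
rewrite /rsum; apply: (big_ind2 (fun a b => Rabs a <= b)).
- rewrite Rabs_R0; lra.
- move=> a b c d H1 H2; apply: Rle_trans (Rabs_triang _ _) _; lra.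
- move=> i _; lra.
Qed.

Lemma rsum_nonneg_le f i : (forall j, 0 <= f j) -> f i <= rsum f.
Proof.
move=> H; rewrite /rsum (bigD1 i) //=.
have : 0 <= \big[Rplus/R0]_(j | j != i) f j.
  apply: (big_ind (fun a => 0 <= a)).
  - lra.
  - move=> ? ? ? ?; lra.
  - by move=> j _; apply: H.
lra.
Qed.

Lemma rsum_const c : rsum (fun _ : I => c) = INR #|I| * c.
Proof.
rewrite /rsum big_const.
elim: #|I| => [|k IH]; first by rewrite /=; ring.
rewrite S_INR [iter _ _ _]/= IH; ring.
Qed.

End Sums.

Section Norms.
Variable I : finType.
Implicit Types u v w : I -> R.

Lemma dot_ge0 u : 0 <= dot u u.
Proof. apply: rsum_ge0 => i; nra. Qed.

Lemma norm_ge0 u : 0 <= norm u.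
Proof. apply: sqrt_pos. Qed.

Lemma norm_sq u : norm u * norm u = dot u u.
Proof. by rewrite /norm sqrt_sqrt //; apply: dot_ge0. Qed.

Lemma comp_le_norm u i : Rabs (u i) <= norm u.
Proof.
rewrite /norm -sqrt_Rsqr_abs; apply: sqrt_le_1_alt.
rewrite /Rsqr /dot; apply: rsum_nonneg_le => j; nra.
Qed.

Lemma norm_le_sum_abs u : norm u <= rsum (fun i => Rabs (u i)).
Proof.
set S := rsum _.
have HS : 0 <= S by apply: rsum_ge0 => i; apply: Rabs_pos.
rewrite /norm -(sqrt_square S) //; apply: sqrt_le_1_alt.
rewrite /dot -rsum_scalr; apply: rsum_le => i.
have := @rsum_nonneg_le _ (fun j => Rabs (u j)) i (fun j => Rabs_pos _).
rewrite -/S => H.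
have : u i * u i = Rabs (u i) * Rabs (u i) by rewrite -Rabs_mult Rabs_right; nra.
have := Rabs_pos (u i). nra.
Qed.

Lemma dot_comm u v : dot u v = dot v u.
Proof. by apply: rsum_ext => i; ring. Qed.

Lemma dot_expand u v t :
  dot (fun i => u i + t * v i) (fun i => u i + t * v i) =
  dot u u + 2 * t * dot u v + t * t * dot v v.
Proof.
rewrite /dot.
have -> : (fun i => (u i + t * v i) * (u i + t * v i)) =
          (fun i => u i * u i + ((2 * t) * (u i * v i) + (t * t) * (v i * v i))).
  by apply: functional_extensionality => i; ring.
rewrite !rsum_add !rsum_scal; ring.
Qed.

Lemma cauchy_schwarz_sq u v : dot u v * dot u v <= dot u u * dot v v.
Proof.
have Hq : forall t, 0 <= dot u u + 2 * t * dot u v + t * t * dot v v.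
  by move=> t; rewrite -dot_expand; apply: dot_ge0.
have Hu := dot_ge0 u; have Hv := dot_ge0 v.
case: (Req_dec (dot v v) 0) => Hc.
- rewrite Hc in Hq.
  case: (Req_dec (dot u v) 0) => Hb; first (rewrite Hb; nra).
  have := Hq (- (dot u u + 1) / (2 * dot u v)).
  have -> : dot u u + 2 * (- (dot u u + 1) / (2 * dot u v)) * dot u v + 
     (- (dot u u + 1) / (2 * dot u v)) * (- (dot u u + 1) / (2 * dot u v)) * 0 = -1.
    field; auto.
  lra.
- have Hc' : 0 < dot v v by lra.
  have := Hq (- dot u v / dot v v).
  have -> : dot u u + 2 * (- dot u v / dot v v) * dot u v +
    (- dot u v / dot v v) * (- dot u v / dot v v) * dot v v =
    (dot u u * dot v v - dot u v * dot u v) / dot v v by field; lra.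
  move=> H.
  have : 0 <= (dot u u * dot v v - dot u v * dot u v) / dot v v * dot v v by nra.
  have -> : (dot u u * dot v v - dot u v * dot u v) / dot v v * dot v v =
     dot u u * dot v v - dot u v * dot u v by field; lra.
  lra.
Qed.

Lemma cauchy_schwarz u v : Rabs (dot u v) <= norm u * norm v.
Proof.
apply: Rsqr_incr_0_var; last by apply: Rmult_le_pos; apply: norm_ge0.
rewrite /Rsqr -Rabs_mult Rabs_right; last nra.
have -> : norm u * norm v * (norm u * norm v) = (norm u * norm u) * (norm v * norm v) by ring.
rewrite !norm_sq; apply: cauchy_schwarz_sq.
Qed.

Lemma norm_triang u v : norm (fun i => u i + v i) <= norm u + norm v.
Proof.
have H1 := norm_ge0 u; have H2 := norm_ge0 v.
apply: Rsqr_incr_0_var; last lra.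
rewrite /Rsqr norm_sq.
have -> : dot (fun i => u i + v i) (fun i => u i + v i) =
          dot (fun i => u i + 1 * v i) (fun i => u i + 1 * v i).
  by apply: rsum_ext => i; ring.
rewrite dot_expand.
have := cauchy_schwarz u v. have := Rle_abs (dot u v).
have := norm_sq u; have := norm_sq v. nra.
Qed.

Lemma norm_scal c u : norm (fun i => c * u i) = Rabs c * norm u.
Proof.
rewrite /norm -sqrt_Rsqr_abs -sqrt_mult; try (apply: Rle_0_sqr || apply: dot_ge0).
congr sqrt; rewrite /dot -rsum_scal; apply: rsum_ext => i; rewrite /Rsqr; ring.
Qed.

Lemma norm_ext u v : (forall i, u i = v i) -> norm u = norm v.
Proof. by move=> H; rewrite /norm /dot; congr sqrt; apply: rsum_ext => i; rewrite H. Qed.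

Lemma norm_opp u : norm (fun i => - u i) = norm u.
Proof.
rewrite (@norm_ext _ (fun i => -1 * u i)); last by move=> i; ring.
rewrite norm_scal Rabs_Ropp Rabs_R1; ring.
Qed.

Lemma norm_vsub_sym u v : norm (vsub u v) = norm (vsub v u).
Proof. rewrite -norm_opp; apply: norm_ext => i; rewrite /vsub; ring. Qed.

Lemma norm_zero : norm (fun _ : I => 0) = 0.
Proof.
rewrite /norm /dot (rsum_ext (g := fun _ => 0)); last by move=> i; ring.
by rewrite rsum0 sqrt_0.
Qed.

Lemma norm_vsub_triang u v w : norm (vsub u w) <= norm (vsub u v) + norm (vsub v w).
Proof.
rewrite (@norm_ext (vsub u w) (fun i => vsub u v i + vsub v w i)); last by move=> i; rewrite /vsub; ring.
apply: norm_triang.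
Qed.

Lemma abs_dot_le u v : Rabs (dot u v) <= rsum (fun i => Rabs (u i)) * norm v.
Proof.
apply: Rle_trans (rsum_abs _) _; rewrite -rsum_scalr; apply: rsum_le => i.
rewrite Rabs_mult; apply: Rmult_le_compat_l; [apply: Rabs_pos| apply: comp_le_norm].
Qed.

Lemma norm_le_comp_bound u e : (forall i, Rabs (u i) <= e) -> norm u <= INR #|I| * e.
Proof.
move=> H; apply: Rle_trans (norm_le_sum_abs u) _; rewrite -rsum_const; exact: rsum_le.
Qed.

Lemma norm_unit (d : I) t : norm (fun j => if j == d then t else 0) = Rabs t.
Proof.
rewrite /norm /dot /rsum (bigD1 d) //= eqxx big1; last first.
  by move=> j /negbTE ->; ring.
by rewrite Rplus_0_r sqrt_Rsqr_abs.
Qed.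

End Norms.

Lemma Rabs0 : Rabs 0 = 0. Proof. exact: Rabs_R0. Qed.

Section Diff.
Variable D : finType.
Notation V := (D -> R).
Implicit Types (f g : V -> R) (x y : V) (a b : V).

Definition sdiff f x a := forall eps, 0 < eps -> exists delta, 0 < delta /\
  forall y, norm (vsub y x) < delta ->
    Rabs (f y - f x - dot a (vsub y x)) <= eps * norm (vsub y x).

Definition scont f x := forall eps, 0 < eps -> exists delta, 0 < delta /\
  forall y, norm (vsub y x) < delta -> Rabs (f y - f x) < eps.

Lemma dot_lin a b (al be : R) h :
  dot (fun d => al * a d + be * b d) h = al * dot a h + be * dot b h.
Proof.
rewrite /dot -!rsum_scal -rsum_add; apply: rsum_ext => i; ring.
Qed.

Lemma dot_zero h : dot (fun _ : D => 0) h = 0.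
Proof.
have -> : dot (fun _ : D => 0) h = rsum (fun _ : D => 0) by apply: rsum_ext => i; ring.
by rewrite rsum0.
Qed.

Lemma norm_self x : norm (vsub x x) = 0.
Proof.
rewrite (@norm_ext _ _ (fun _ => 0)); first exact: norm_zero.
by move=> i; rewrite /vsub; ring.
Qed.

Lemma sdiff_loclip f x a : sdiff f x a -> exists delta K, 0 < delta /\ 0 <= K /\
  forall y, norm (vsub y x) < delta -> Rabs (f y - f x) <= K * norm (vsub y x).
Proof.
move=> H; have [d [Hd Hy]] := H 1 Rlt_0_1.
exists d, (1 + rsum (fun i => Rabs (a i))); split => //.
have := rsum_ge0 (fun i => Rabs_pos (a i)); split; first lra.
move=> y Hyx; have := Hy y Hyx; have := abs_dot_le a (vsub y x).
set u := f y - f x; set w := dot a (vsub y x).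
have := Rabs_triang (u - w) w; have -> : u - w + w = u by ring.
lra.
Qed.

Lemma sdiff_cont f x a : sdiff f x a -> scont f x.
Proof.
move=> /sdiff_loclip [d [K [Hd [HK H]]]] eps Heps.
exists (Rmin d (eps / (K + 1))); split.
  apply: Rmin_pos => //; apply: Rdiv_lt_0_compat; lra.
move=> y Hy; have Hy1 : norm (vsub y x) < d by apply: Rlt_le_trans Hy (Rmin_l _ _).
have Hy2 : norm (vsub y x) < eps / (K + 1) by apply: Rlt_le_trans Hy (Rmin_r _ _).
apply: Rle_lt_trans (H y Hy1) _.
have Hn := norm_ge0 (vsub y x).
have : (K + 1) * norm (vsub y x) < eps.
  have := Rmult_lt_compat_l (K + 1) _ _ ltac:(lra) Hy2.
  have -> : (K + 1) * (eps / (K + 1)) = eps by field; lra.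
  done.
nra.
Qed.

Lemma sdiff_const c x : sdiff (fun _ => c) x (fun _ => 0).
Proof.
move=> eps He; exists 1; split; first lra.
move=> y _; rewrite dot_zero; have := norm_ge0 (vsub y x).
rewrite (_ : c - c - 0 = 0); last ring. rewrite Rabs_R0; nra.
Qed.

Lemma sdiff_coord (d : D) x : sdiff (fun y => y d) x (fun j => if j == d then 1 else 0).
Proof.
move=> eps He; exists 1; split; first lra.
move=> y _.
have -> : dot (fun j => if j == d then 1 else 0) (vsub y x) = vsub y x d.
  rewrite /dot /rsum (bigD1 d) //= eqxx big1; first (rewrite /vsub; ring).
  by move=> j /negbTE ->; ring.
rewrite (_ : y d - x d - vsub y x d = 0); last by rewrite /vsub; ring.
rewrite Rabs_R0; have := norm_ge0 (vsub y x); nra.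
Qed.

Lemma sdiff_add f g x a b : sdiff f x a -> sdiff g x b ->
  sdiff (fun y => f y + g y) x (fun d => a d + b d).
Proof.
move=> Hf Hg eps He.
have [d1 [Hd1 H1]] := Hf (eps / 2) ltac:(lra).
have [d2 [Hd2 H2]] := Hg (eps / 2) ltac:(lra).
exists (Rmin d1 d2); split; first by apply: Rmin_pos.
move=> y Hy.
have Hy1 := Rlt_le_trans _ _ _ Hy (Rmin_l _ _).
have Hy2 := Rlt_le_trans _ _ _ Hy (Rmin_r _ _).
have := H1 y Hy1; have := H2 y Hy2.
have -> : dot (fun d => a d + b d) (vsub y x) = dot a (vsub y x) + dot b (vsub y x).
  by rewrite (_ : (fun d => a d + b d) = (fun d => 1 * a d + 1 * b d)) ?dot_lin;
   [ring | apply: functional_extensionality => i; ring].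
set u := f y - f x - dot a (vsub y x); set w := g y - g x - dot b (vsub y x).
have -> : f y + g y - (f x + g x) - (dot a (vsub y x) + dot b (vsub y x)) = u + w
  by rewrite /u /w; ring.
have := Rabs_triang u w; lra.
Qed.

Lemma sdiff_scal c f x a : sdiff f x a -> sdiff (fun y => c * f y) x (fun d => c * a d).
Proof.
move=> Hf eps He.
have [d1 [Hd1 H1]] := Hf (eps / (Rabs c + 1)) ltac:(apply: Rdiv_lt_0_compat; have := Rabs_pos c; lra).
exists d1; split => // y Hy.
have -> : dot (fun d => c * a d) (vsub y x) = c * dot a (vsub y x).
  by rewrite (_ : (fun d => c * a d) = (fun d => c * a d + 0 * a d)) ?dot_lin;
   [ring | apply: functional_extensionality => i; ring].
rewrite (_ : c * f y - c * f x - c * dot a (vsub y x) = c * (f y - f x - dot a (vsub y x))); last ring.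
rewrite Rabs_mult; have := H1 y Hy; have := Rabs_pos c; have := Rabs_pos (f y - f x - dot a (vsub y x)).
have := norm_ge0 (vsub y x).
move=> Hn Hp Hc Hle.
apply: Rle_trans (Rmult_le_compat_l _ _ _ Hc Hle) _.
have -> : Rabs c * (eps / (Rabs c + 1) * norm (vsub y x)) = (Rabs c / (Rabs c + 1)) * eps * norm (vsub y x)
  by field; lra.
have : Rabs c / (Rabs c + 1) <= 1.
  apply: (Rmult_le_reg_r (Rabs c + 1)); first lra.
  rewrite /Rdiv Rmult_assoc Rinv_l; lra.
have := Rmult_le_pos _ _ (Rlt_le _ _ He) Hn.
rewrite Rmult_assoc; set P := eps * norm (vsub y x); nra.
Qed.

Lemma sdiff_mul f g x a b : sdiff f x a -> sdiff g x b ->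
  sdiff (fun y => f y * g y) x (fun d => f x * b d + g x * a d).
Proof.
move=> Hf Hg eps He.
have [d0 [K [Hd0 [HK HL]]]] := sdiff_loclip Hf.
have Hgc := sdiff_cont Hg.
set e1 := eps / (3 * (Rabs (g x) + 1)).
set e2 := eps / (3 * (Rabs (f x) + 1)).
set e3 := eps / (3 * (K + 1)).
have He1 : 0 < e1 by apply: Rdiv_lt_0_compat; have := Rabs_pos (g x); lra.
have He2 : 0 < e2 by apply: Rdiv_lt_0_compat; have := Rabs_pos (f x); lra.
have He3 : 0 < e3 by apply: Rdiv_lt_0_compat; lra.
have [d1 [Hd1 H1]] := Hf e1 He1.
have [d2 [Hd2 H2]] := Hg e2 He2.
have [d3 [Hd3 H3]] := Hgc e3 He3.
exists (Rmin d0 (Rmin d1 (Rmin d2 d3))); split.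
  by repeat apply: Rmin_pos.
move=> y Hy.
have Hy0 : norm (vsub y x) < d0 by apply: Rlt_le_trans Hy (Rmin_l _ _).
have Hy' := Rlt_le_trans _ _ _ Hy (Rmin_r _ _).
have Hy1 : norm (vsub y x) < d1 by apply: Rlt_le_trans Hy' (Rmin_l _ _).
have Hy'' := Rlt_le_trans _ _ _ Hy' (Rmin_r _ _).
have Hy2 : norm (vsub y x) < d2 by apply: Rlt_le_trans Hy'' (Rmin_l _ _).
have Hy3 : norm (vsub y x) < d3 by apply: Rlt_le_trans Hy'' (Rmin_r _ _).
rewrite dot_lin.
set h := vsub y x.
set u := f y - f x - dot a h; set w := g y - g x - dot b h.
have -> : f y * g y - f x * g x - (f x * dot b h + g x * dot a h) =
   u * g x + f x * w + (f y - f x) * (g y - g x) by rewrite /u /w; ring.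
have Hu := H1 y Hy1; have Hw := H2 y Hy2; have Hl := HL y Hy0; have Hc := H3 y Hy3.
rewrite -/h in Hu Hw Hl Hc.
have Hn := norm_ge0 h.
have T1 : Rabs (u * g x) <= eps / 3 * norm h.
  rewrite Rabs_mult.
  apply: Rle_trans (Rmult_le_compat _ _ _ _ (Rabs_pos _) (Rabs_pos _) Hu (Rle_refl (Rabs (g x)))) _.
  have -> : eps / 3 = e1 * (Rabs (g x) + 1) by rewrite /e1; field; have := Rabs_pos (g x); lra.
  have := Rmult_le_pos _ _ (Rlt_le _ _ He1) Hn. nra.
have T2 : Rabs (f x * w) <= eps / 3 * norm h.
  rewrite Rabs_mult Rmult_comm.
  apply: Rle_trans (Rmult_le_compat _ _ _ _ (Rabs_pos _) (Rabs_pos _) Hw (Rle_refl (Rabs (f x)))) _.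
  have -> : eps / 3 = e2 * (Rabs (f x) + 1) by rewrite /e2; field; have := Rabs_pos (f x); lra.
  have := Rmult_le_pos _ _ (Rlt_le _ _ He2) Hn. nra.
have T3 : Rabs ((f y - f x) * (g y - g x)) <= eps / 3 * norm h.
  rewrite Rabs_mult.
  apply: Rle_trans (Rmult_le_compat _ _ _ _ (Rabs_pos _) (Rabs_pos _) Hl (Rlt_le _ _ Hc)) _.
  have -> : eps / 3 = e3 * (K + 1) by rewrite /e3; field; lra.
  have := Rmult_le_pos _ _ (Rlt_le _ _ He3) Hn. nra.
have := Rabs_triang (u * g x + f x * w) ((f y - f x) * (g y - g x)).
have := Rabs_triang (u * g x) (f x * w).
lra.
Qed.

Lemma sdiff_ext f g x a b : (forall y, f y = g y) -> (forall d, a d = b d) ->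
  sdiff f x a -> sdiff g x b.
Proof.
move=> Hfg Hab H eps He; have [d [Hd Hy]] := H eps He; exists d; split => // y Hyx.
rewrite -!Hfg (_ : dot b _ = dot a (vsub y x)); first exact: Hy.
by apply: rsum_ext => i; rewrite Hab.
Qed.

Lemma sdiff_comp1 (phi : R -> R) phi' f x a :
  derivable_pt_lim phi (f x) phi' -> sdiff f x a ->
  sdiff (fun y => phi (f y)) x (fun d => phi' * a d).
Proof.
move=> Hp Hf eps He.
have [d0 [K [Hd0 [HK HL]]]] := sdiff_loclip Hf.
set e1 := eps / (2 * (K + 1)).
set e2 := eps / (2 * (Rabs phi' + 1)).
have He1 : 0 < e1 by apply: Rdiv_lt_0_compat; lra.
have He2 : 0 < e2 by apply: Rdiv_lt_0_compat; have := Rabs_pos phi'; lra.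
have [d1 Hd1] := Hp e1 He1.
have [d2 [Hd2 H2]] := Hf e2 He2.
have Hc := sdiff_cont Hf.
have [d3 [Hd3 H3]] := Hc d1 (cond_pos d1).
exists (Rmin d0 (Rmin d2 d3)); split; first by repeat apply: Rmin_pos.
move=> y Hy.
have Hy0 : norm (vsub y x) < d0 by apply: Rlt_le_trans Hy (Rmin_l _ _).
have Hy' := Rlt_le_trans _ _ _ Hy (Rmin_r _ _).
have Hy2 : norm (vsub y x) < d2 by apply: Rlt_le_trans Hy' (Rmin_l _ _).
have Hy3 : norm (vsub y x) < d3 by apply: Rlt_le_trans Hy' (Rmin_r _ _).
set h := vsub y x.
rewrite (_ : dot _ h = phi' * dot a h); last first.
  by rewrite (_ : (fun d => phi' * a d) = (fun d => phi' * a d + 0 * a d)) ?dot_lin;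
   [ring | apply: functional_extensionality => i; ring].
set k := f y - f x.
have Hn := norm_ge0 h.
have Hk : Rabs k <= K * norm h by apply: HL.
have Hw := H2 y Hy2; rewrite -/h -/k in Hw.
have T1 : Rabs (phi (f y) - phi (f x) - phi' * k) <= e1 * Rabs k.
  case: (Req_dec k 0) => Hk0.
    have -> : f y = f x by rewrite /k in Hk0; lra.
    rewrite Hk0; rewrite (_ : phi (f x) - phi (f x) - phi' * 0 = 0); last ring.
    rewrite !Rabs0; lra.
  have Hkd : Rabs k < d1 by have := H3 y Hy3.
  have := Hd1 k Hk0 Hkd.
  rewrite (_ : f x + k = f y); last by rewrite /k; ring.
  move=> Hq.
  have -> : phi (f y) - phi (f x) - phi' * k = ((phi (f y) - phi (f x)) / k - phi') * k
    by field.
  rewrite Rabs_mult; apply: Rmult_le_compat_r; [apply: Rabs_pos| lra].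
have T2 : Rabs (phi' * (k - dot a h)) <= eps / 2 * norm h.
  rewrite Rabs_mult Rmult_comm.
  apply: Rle_trans (Rmult_le_compat _ _ _ _ (Rabs_pos _) (Rabs_pos _) Hw (Rle_refl (Rabs phi'))) _.
  have -> : eps / 2 = e2 * (Rabs phi' + 1) by rewrite /e2; field; have := Rabs_pos phi'; lra.
  have := Rmult_le_pos _ _ (Rlt_le _ _ He2) Hn. nra.
have T1' : e1 * Rabs k <= eps / 2 * norm h.
  have -> : eps / 2 = e1 * (K + 1) by rewrite /e1; field; lra.
  apply: Rle_trans (Rmult_le_compat_l _ _ _ (Rlt_le _ _ He1) Hk) _.
  have := Rmult_le_pos _ _ (Rlt_le _ _ He1) Hn. nra.
have -> : phi (f y) - phi (f x) - phi' * dot a h =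
   (phi (f y) - phi (f x) - phi' * k) + phi' * (k - dot a h) by ring.
have := Rabs_triang (phi (f y) - phi (f x) - phi' * k) (phi' * (k - dot a h)).
lra.
Qed.

End Diff.

Lemma mul_bound a b A B : Rabs a <= A -> Rabs b <= B -> Rabs (a * b) <= A * B.
Proof.
move=> Ha Hb; rewrite Rabs_mult; apply: Rmult_le_compat => //; apply: Rabs_pos.
Qed.

Section Diff2.
Variable D : finType.
Notation V := (D -> R).
Implicit Types (f g : V -> R) (x y : V) (a b : V).

Lemma scont_add f g x : scont f x -> scont g x -> scont (fun y => f y + g y) x.
Proof.
move=> Hf Hg eps He.
have [d1 [Hd1 H1]] := Hf (eps / 2) ltac:(lra).
have [d2 [Hd2 H2]] := Hg (eps / 2) ltac:(lra).
exists (Rmin d1 d2); split; first by apply: Rmin_pos.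
move=> y Hy.
have := H1 y (Rlt_le_trans _ _ _ Hy (Rmin_l _ _)).
have := H2 y (Rlt_le_trans _ _ _ Hy (Rmin_r _ _)).
have := Rabs_triang (f y - f x) (g y - g x).
rewrite (_ : f y + g y - (f x + g x) = f y - f x + (g y - g x)); last ring.
lra.
Qed.

Lemma scont_mul f g x : scont f x -> scont g x -> scont (fun y => f y * g y) x.
Proof.
move=> Hf Hg eps He.
set B := Rabs (f x) + Rabs (g x) + 1.
have HB : 0 < B by rewrite /B; have := Rabs_pos (f x); have := Rabs_pos (g x); lra.
set e := Rmin 1 (eps / (2 * B)).
have He' : 0 < e by apply: Rmin_pos; [lra| apply: Rdiv_lt_0_compat; lra].
have He1 : e <= 1 by apply: Rmin_l.
have He2 : e <= eps / (2 * B) by apply: Rmin_r.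
have [d1 [Hd1 H1]] := Hf e He'.
have [d2 [Hd2 H2]] := Hg e He'.
exists (Rmin d1 d2); split; first by apply: Rmin_pos.
move=> y Hy.
have A1 := H1 y (Rlt_le_trans _ _ _ Hy (Rmin_l _ _)).
have A2 := H2 y (Rlt_le_trans _ _ _ Hy (Rmin_r _ _)).
rewrite (_ : f y * g y - f x * g x = (f y - f x) * (g y - g x) + f x * (g y - g x) + g x * (f y - f x)); last ring.
have T1 := mul_bound (Rlt_le _ _ A1) (Rlt_le _ _ A2).
have T2 := mul_bound (Rle_refl (Rabs (f x))) (Rlt_le _ _ A2).
have T3 := mul_bound (Rle_refl (Rabs (g x))) (Rlt_le _ _ A1).
have := Rabs_triang ((f y - f x) * (g y - g x) + f x * (g y - g x)) (g x * (f y - f x)).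
have := Rabs_triang ((f y - f x) * (g y - g x)) (f x * (g y - g x)).
have : e * e <= e by nra.
have : e * B <= eps / 2.
  have -> : eps / 2 = (eps / (2 * B)) * B by field; lra.
  by apply: Rmult_le_compat_r; lra.
rewrite /B in HB |- *.
have := Rabs_pos (f x); have := Rabs_pos (g x).
nra.
Qed.

Lemma scont_const c x : scont (fun _ => c) x.
Proof. move=> eps He; exists 1; split; first lra; move=> y _; rewrite Rminus_diag Rabs0; lra. Qed.

Lemma scont_comp (phi : R -> R) f x L : 0 <= L ->
  (exists d0, 0 < d0 /\ forall y, norm (vsub y x) < d0 -> Rabs (phi (f y) - phi (f x)) <= L * Rabs (f y - f x)) ->
  scont f x -> scont (fun y => phi (f y)) x.
Proof.
move=> HL [d0 [Hd0 Hphi]] Hf eps He.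
have [d1 [Hd1 H1]] := Hf (eps / (L + 1)) ltac:(apply: Rdiv_lt_0_compat; lra).
exists (Rmin d0 d1); split; first by apply: Rmin_pos.
move=> y Hy.
have A0 := Hphi y (Rlt_le_trans _ _ _ Hy (Rmin_l _ _)).
have A1 := H1 y (Rlt_le_trans _ _ _ Hy (Rmin_r _ _)).
apply: Rle_lt_trans A0 _.
have : L * Rabs (f y - f x) <= L * (eps / (L + 1)) by apply: Rmult_le_compat_l; lra.
have : L * (eps / (L + 1)) < eps.
  apply: (Rmult_lt_reg_r (L + 1)); first lra.
  rewrite Rmult_assoc (_ : eps / (L + 1) * (L + 1) = eps); last by field; lra.
  nra.
lra.
Qed.

Lemma scont_sdiff_const c x : scont (fun _ : V => c) x.
Proof. exact: scont_const. Qed.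

Lemma sdiff_big (T : Type) (s : seq T) (P : pred T) (F : T -> V -> R) (G : T -> V) x :
  (forall i, P i -> sdiff (F i) x (G i)) ->
  sdiff (fun y => \big[Rplus/R0]_(i <- s | P i) F i y) x
        (fun d => \big[Rplus/R0]_(i <- s | P i) G i d).
Proof.
move=> H; elim: s => [|i s IH].
  apply: (@sdiff_ext _ (fun _ => 0) _ _ (fun _ => 0)); try by move=> ?; rewrite big_nil.
  exact: sdiff_const.
case HP : (P i).
- apply: (@sdiff_ext _ (fun y => F i y + \big[Rplus/R0]_(j <- s | P j) F j y) _ _
     (fun d => G i d + \big[Rplus/R0]_(j <- s | P j) G j d)).
  + by move=> y; rewrite big_cons HP.
  + by move=> d; rewrite big_cons HP.
  apply: sdiff_add => //; exact: H.
- apply: (sdiff_ext _ _ IH).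
  + by move=> y; rewrite big_cons HP.
  + by move=> d; rewrite big_cons HP.
Qed.

Lemma scont_big (T : Type) (s : seq T) (P : pred T) (F : T -> V -> R) x :
  (forall i, P i -> scont (F i) x) ->
  scont (fun y => \big[Rplus/R0]_(i <- s | P i) F i y) x.
Proof.
move=> H; elim: s => [|i s IH].
  move=> eps He; exists 1; split; first lra; move=> y _; rewrite !big_nil Rminus_diag Rabs0; lra.
case HP : (P i).
- have E : (fun y => \big[Rplus/R0]_(j <- i :: s | P j) F j y) =
           (fun y => F i y + \big[Rplus/R0]_(j <- s | P j) F j y).
    by apply: functional_extensionality => y; rewrite big_cons HP.
  rewrite E; apply: scont_add => //; exact: H.
- have E : (fun y => \big[Rplus/R0]_(j <- i :: s | P j) F j y) =
           (fun y => \big[Rplus/R0]_(j <- s | P j) F j y).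
    by apply: functional_extensionality => y; rewrite big_cons HP.
  by rewrite E.
Qed.

Definition seg x y (t : R) : V := fun i => x i + t * (y i - x i).

Lemma seg_diff x y t s : norm (vsub (seg x y s) (seg x y t)) = Rabs (s - t) * norm (vsub y x).
Proof.
rewrite -norm_scal; apply: norm_ext => i; rewrite /seg /vsub; ring.
Qed.

Lemma seg_dist x y t : norm (vsub (seg x y t) x) = Rabs t * norm (vsub y x).
Proof.
rewrite -norm_scal; apply: norm_ext => i; rewrite /seg /vsub; ring.
Qed.

Lemma seg1 x y : seg x y 1 = y.
Proof. apply: functional_extensionality => i; rewrite /seg; ring. Qed.
Lemma seg0 x y : seg x y 0 = x.
Proof. apply: functional_extensionality => i; rewrite /seg; ring. Qed.

Lemma deriv_seg f x y t G : sdiff f (seg x y t) G ->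
  derivable_pt_lim (fun s => f (seg x y s)) t (dot G (vsub y x)).
Proof.
move=> H eps He.
have HN := norm_ge0 (vsub y x).
set N := norm (vsub y x) in HN *.
have [d [Hd Hy]] := H (eps / (2 * (N + 1))) ltac:(apply: Rdiv_lt_0_compat; lra).
have Hdp : 0 < d / (N + 1) by apply: Rdiv_lt_0_compat; lra.
exists (mkposreal _ Hdp) => h Hh0 Hh /=.
have Hs : norm (vsub (seg x y (t + h)) (seg x y t)) < d.
  rewrite seg_diff (_ : t + h - t = h); last ring.
  rewrite -/N; apply: (Rle_lt_trans _ (Rabs h * (N + 1))); first (apply: Rmult_le_compat_l; [apply: Rabs_pos| lra]).
  have -> : d = d / (N + 1) * (N + 1) by field; lra.
  apply: Rmult_lt_compat_r => //; lra.
have := Hy _ Hs.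
rewrite seg_diff (_ : t + h - t = h); last ring.
have -> : dot G (vsub (seg x y (t + h)) (seg x y t)) = h * dot G (vsub y x).
  rewrite /dot -rsum_scal; apply: rsum_ext => i; rewrite /vsub /seg; ring.
move=> Hb.
have Hha : 0 < Rabs h by apply: Rabs_pos_lt.
have -> : (f (seg x y (t + h)) - f (seg x y t)) / h - dot G (vsub y x) =
   (f (seg x y (t + h)) - f (seg x y t) - h * dot G (vsub y x)) / h by field.
rewrite /Rdiv Rabs_mult Rabs_inv.
apply: (Rmult_lt_reg_r (Rabs h)) => //.
rewrite Rmult_assoc Rinv_l; last lra.
rewrite Rmult_1_r; apply: Rle_lt_trans Hb _.
rewrite -/N.
have : eps / (2 * (N + 1)) * N < eps.
  have -> : eps / (2 * (N + 1)) * N = eps * (N / (2 * (N + 1))) by field; lra.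
  have : N / (2 * (N + 1)) < 1.
    apply: (Rmult_lt_reg_r (2 * (N + 1))); first lra.
    rewrite /Rdiv Rmult_assoc Rinv_l; lra.
  nra.
move=> H1.
have -> : eps / (2 * (N + 1)) * (Rabs h * N) = (eps / (2 * (N + 1)) * N) * Rabs h by ring.
by apply: Rmult_lt_compat_r.
Qed.

Lemma mvt_seg f x y (G : V -> V) M :
  (forall t, 0 <= t <= 1 -> sdiff f (seg x y t) (G (seg x y t))) ->
  (forall t, 0 <= t <= 1 -> Rabs (dot (G (seg x y t)) (vsub y x)) <= M) ->
  Rabs (f y - f x) <= M.
Proof.
move=> Hd HM.
have [c [Hc Hc']] := MVT_cor2 (fun s => f (seg x y s)) (fun s => dot (G (seg x y s)) (vsub y x)) 0 1 Rlt_0_1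
  (fun c Hc => deriv_seg (Hd c Hc)).
move: Hc; rewrite seg1 seg0 (_ : 1 - 0 = 1); last ring.
rewrite Rmult_1_r => ->; apply: HM; lra.
Qed.

End Diff2.

Lemma prod_lip a a0 b b0 A Ka Kb n :
  Rabs a <= A -> Rabs (a - a0) <= Ka * n -> Rabs (b - b0) <= Kb * n ->
  Rabs (a * b - a0 * b0) <= (A * Kb + Rabs b0 * Ka) * n.
Proof.
move=> H1 H2 H3.
rewrite (_ : a * b - a0 * b0 = a * (b - b0) + b0 * (a - a0)); last ring.
apply: Rle_trans (Rabs_triang _ _) _.
have T1 := mul_bound H1 H3.
have T2 := mul_bound (Rle_refl (Rabs b0)) H2.
lra.
Qed.

Lemma abs_sub_bound a a0 K n : Rabs (a - a0) <= K * n -> Rabs a <= Rabs a0 + K * n.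
Proof.
move=> H; have := Rabs_triang (a - a0) a0; rewrite (_ : a - a0 + a0 = a); last ring; lra.
Qed.

Section Good.
Variable D : finType.
Notation V := (D -> R).
Variable cf : Prop.
Variable x0 : V.

Definition GoodD (r : R) (f : V -> R) (Df : V -> V) (K : R) :=
  0 <= K /\ forall y, norm (vsub y x0) <= r ->
  [/\ sdiff f y (Df y),
      Rabs (f y - f x0) <= K * norm (vsub y x0),
      (forall d, Rabs (Df y d - Df x0 d) <= K * norm (vsub y x0)) &
      (cf -> norm (vsub y x0) < r -> forall d, scont (fun z => Df z d) y)].

Definition Good r f := exists Df K, GoodD r f Df K.

Lemma GoodD_bound r f Df K y : GoodD r f Df K -> norm (vsub y x0) <= r ->
  Rabs (f y) <= Rabs (f x0) + K * r /\ forall d, Rabs (Df y d) <= Rabs (Df x0 d) + K * r.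
Proof.
move=> [HK H] Hy; have [_ H2 H3 _] := H y Hy; split.
  apply: Rle_trans (abs_sub_bound H2) _; have := Rmult_le_compat_l K _ _ HK Hy; lra.
move=> d; apply: Rle_trans (abs_sub_bound (H3 d)) _; have := Rmult_le_compat_l K _ _ HK Hy; lra.
Qed.

Lemma Good_const r c : Good r (fun _ => c).
Proof.
exists (fun _ _ => 0), 0; split; first lra.
move=> y Hy; split.
- exact: sdiff_const.
- rewrite Rminus_diag Rabs0; lra.
- by move=> d; rewrite Rminus_diag Rabs0; lra.
- by move=> _ _ d; apply: scont_const.
Qed.

Lemma Good_add r f g : Good r f -> Good r g -> Good r (fun y => f y + g y).
Proof.
move=> [Df [Kf [HKf Hf]]] [Dg [Kg [HKg Hg]]].
exists (fun y d => Df y d + Dg y d), (Kf + Kg); split; first lra.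
move=> y Hy; have [F1 F2 F3 F4] := Hf y Hy; have [G1 G2 G3 G4] := Hg y Hy; split.
- exact: sdiff_add.
- rewrite (_ : f y + g y - (f x0 + g x0) = (f y - f x0) + (g y - g x0)); last ring.
  apply: Rle_trans (Rabs_triang _ _) _; lra.
- move=> d; rewrite (_ : Df y d + Dg y d - (Df x0 d + Dg x0 d) = (Df y d - Df x0 d) + (Dg y d - Dg x0 d)); last ring.
  apply: Rle_trans (Rabs_triang _ _) _; have := F3 d; have := G3 d; lra.
- move=> Hc Hlt d; apply: scont_add; [exact: F4| exact: G4].
Qed.

Lemma Good_mul r f g : Good r f -> Good r g -> Good r (fun y => f y * g y).
Proof.
move=> [Df [Kf GF]] [Dg [Kg GG]].
have [HKf Hf] := GF; have [HKg Hg] := GG.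
set Bf := Rabs (f x0) + Kf * r; set Bg := Rabs (g x0) + Kg * r.
set Sf := rsum (fun d => Rabs (Df x0 d)); set Sg := rsum (fun d => Rabs (Dg x0 d)).
have HSf : 0 <= Sf by apply: rsum_ge0 => d; apply: Rabs_pos.
have HSg : 0 <= Sg by apply: rsum_ge0 => d; apply: Rabs_pos.
have HSf' : forall d, Rabs (Df x0 d) <= Sf by move=> d; apply: rsum_nonneg_le => j; apply: Rabs_pos.
have HSg' : forall d, Rabs (Dg x0 d) <= Sg by move=> d; apply: rsum_nonneg_le => j; apply: Rabs_pos.
exists (fun y d => f y * Dg y d + g y * Df y d),
  (Rabs (Bf * Kg + Rabs (g x0) * Kf) + Rabs (Bf * Kg + Sg * Kf) + Rabs (Bg * Kf + Sf * Kg)).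
split; first by have := Rabs_pos (Bf * Kg + Rabs (g x0) * Kf); have := Rabs_pos (Bf * Kg + Sg * Kf);
  have := Rabs_pos (Bg * Kf + Sf * Kg); lra.
move=> y Hy; have [F1 F2 F3 F4] := Hf y Hy; have [G1 G2 G3 G4] := Hg y Hy.
have [Bfy _] := GoodD_bound GF Hy; have [Bgy _] := GoodD_bound GG Hy.
rewrite -/Bf in Bfy; rewrite -/Bg in Bgy.
have Hn := norm_ge0 (vsub y x0).
set n := norm (vsub y x0) in Hn F2 G2 F3 G3 Hy *.
set K1 := Bf * Kg + Rabs (g x0) * Kf.
set K2 := Bf * Kg + Sg * Kf.
set K3 := Bg * Kf + Sf * Kg.
have Hk : forall k, k * n <= Rabs k * n by move=> k; apply: Rmult_le_compat_r => //; apply: Rle_abs.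
have HK1 := Hk K1; have HK2 := Hk K2; have HK3 := Hk K3.
have P1 := Rabs_pos K1; have P2 := Rabs_pos K2; have P3 := Rabs_pos K3.
split.
- exact: sdiff_mul.
- have := prod_lip Bfy F2 G2; rewrite -/K1.
  have := Rmult_le_compat_r n _ _ Hn (Rle_refl 0).
  have : Rabs K2 * n >= 0 by nra.
  have : Rabs K3 * n >= 0 by nra.
  lra.
- move=> d.
  rewrite (_ : f y * Dg y d + g y * Df y d - (f x0 * Dg x0 d + g x0 * Df x0 d) =
     (f y * Dg y d - f x0 * Dg x0 d) + (g y * Df y d - g x0 * Df x0 d)); last ring.
  apply: Rle_trans (Rabs_triang _ _) _.
  have T1 := prod_lip Bfy F2 (G3 d).
  have T2 := prod_lip Bgy G2 (F3 d).
  have E1 : (Bf * Kg + Rabs (Dg x0 d) * Kf) * n <= K2 * n.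
    apply: Rmult_le_compat_r => //; have := HSg' d; rewrite /K2; nra.
  have E2 : (Bg * Kf + Rabs (Df x0 d) * Kg) * n <= K3 * n.
    apply: Rmult_le_compat_r => //; have := HSf' d; rewrite /K3; nra.
  have : Rabs K1 * n >= 0 by nra.
  lra.
- move=> Hc Hlt d; apply: scont_add; apply: scont_mul.
  + exact: (sdiff_cont F1).
  + exact: G4.
  + exact: (sdiff_cont G1).
  + exact: F4.
Qed.

Lemma Good_ext r f g : (forall y, f y = g y) -> Good r f -> Good r g.
Proof.
move=> E [Df [K [HK H]]]; exists Df, K; split => // y Hy.
have [H1 H2 H3 H4] := H y Hy; split => //.
- exact: (sdiff_ext E (fun _ => erefl) H1).
- by rewrite -!E.
Qed.

Lemma Good_scal r c f : Good r f -> Good r (fun y => c * f y).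
Proof. move=> H; apply: Good_mul => //; exact: Good_const. Qed.

Lemma Good_opp r f : Good r f -> Good r (fun y => - f y).
Proof.
move=> H; apply: (Good_ext (f := fun y => -1 * f y)); first by move=> y; ring.
exact: Good_scal.
Qed.

Lemma Good_sub r f g : Good r f -> Good r g -> Good r (fun y => f y - g y).
Proof. move=> Hf Hg; apply: Good_add => //; exact: Good_opp. Qed.

Lemma Good_big r (T : Type) (s : seq T) (P : pred T) (F : T -> V -> R) :
  (forall i, P i -> Good r (F i)) ->
  Good r (fun y => \big[Rplus/R0]_(i <- s | P i) F i y).
Proof.
move=> H; elim: s => [|i s IH].
  apply: (Good_ext (f := fun _ => 0)); first by move=> y; rewrite big_nil.
  exact: Good_const.
case HP : (P i).
- apply: (Good_ext (f := fun y => F i y + \big[Rplus/R0]_(j <- s | P j) F j y)).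
    by move=> y; rewrite big_cons HP.
  apply: Good_add => //; exact: H.
- apply: (Good_ext _ IH); by move=> y; rewrite big_cons HP.
Qed.

Lemma Good_mono r r' f : r' <= r -> Good r f -> Good r' f.
Proof.
move=> Hr [Df [K [HK H]]]; exists Df, K; split => // y Hy.
have [H1 H2 H3 H4] := H y (Rle_trans _ _ _ Hy Hr); split => // Hc Hlt; apply: H4 => //; lra.
Qed.

Lemma Good_sdiff r f y : Good r f -> norm (vsub y x0) <= r -> exists G, sdiff f y G.
Proof. by move=> [Df [K [_ H]]] Hy; have [H1 _ _ _] := H y Hy; exists (Df y). Qed.

Lemma Good_lip0 r f : Good r f -> exists K, 0 <= K /\
  forall y, norm (vsub y x0) <= r -> Rabs (f y - f x0) <= K * norm (vsub y x0).
Proof. by move=> [Df [K [HK H]]]; exists K; split => // y Hy; have [_ H2 _ _] := H y Hy. Qed.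

Lemma Good_pos r f : 0 < r -> Good r f -> 0 < f x0 ->
  exists r', 0 < r' /\ r' <= r /\ forall y, norm (vsub y x0) <= r' -> f x0 / 2 <= f y.
Proof.
move=> Hr Hg Hf; have [K [HK H]] := Good_lip0 Hg.
exists (Rmin r (f x0 / (2 * (K + 1)))); split.
  apply: Rmin_pos => //; apply: Rdiv_lt_0_compat; lra.
split; first exact: Rmin_l.
move=> y Hy; have Hy1 := Rle_trans _ _ _ Hy (Rmin_l _ _).
have Hy2 := Rle_trans _ _ _ Hy (Rmin_r _ _).
have := H y Hy1.
have : K * norm (vsub y x0) <= f x0 / 2.
  apply: Rle_trans (Rmult_le_compat_l _ _ _ HK Hy2) _.
  rewrite (_ : K * (f x0 / (2 * (K + 1))) = (f x0 / 2) * (K / (K + 1))); last by field; lra.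
  have : K / (K + 1) <= 1.
    apply: (Rmult_le_reg_r (K + 1)); first lra.
    rewrite /Rdiv Rmult_assoc Rinv_l; lra.
  nra.
move=> H1 H2; have := Rle_abs (-(f y - f x0)); rewrite Rabs_Ropp; lra.
Qed.

End Good.

Section Comp.
Variable D : finType.
Notation V := (D -> R).
Variable cf : Prop.
Variable x0 : V.

Lemma Good_comp r f (S : R -> Prop) phi phi' L :
  0 <= L ->
  (forall y, norm (vsub y x0) <= r -> S (f y)) ->
  (forall s, S s -> derivable_pt_lim phi s (phi' s)) ->
  (forall s t, S s -> S t -> Rabs (phi s - phi t) <= L * Rabs (s - t)) ->
  (forall s t, S s -> S t -> Rabs (phi' s - phi' t) <= L * Rabs (s - t)) ->
  (forall s, S s -> Rabs (phi' s) <= L) ->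
  Good cf x0 r f -> Good cf x0 r (fun y => phi (f y)).
Proof.
move=> HL HS Hd Hl1 Hl2 Hb [Df [Kf GF]]; have [HKf Hf] := GF.
set Sf := rsum (fun d => Rabs (Df x0 d)).
have HSf : 0 <= Sf by apply: rsum_ge0 => d; apply: Rabs_pos.
have HSf' : forall d, Rabs (Df x0 d) <= Sf by move=> d; apply: rsum_nonneg_le => j; apply: Rabs_pos.
exists (fun y d => phi' (f y) * Df y d), (L * Kf + L * Kf + Sf * (L * Kf)).
have P1 : 0 <= L * Kf by apply: Rmult_le_pos.
split; first by have := Rmult_le_pos _ _ HSf P1; lra.
have Hx0 : forall y, norm (vsub y x0) <= r -> 0 <= r by move=> y Hy; have := norm_ge0 (vsub y x0); lra.
move=> y Hy; have [F1 F2 F3 F4] := Hf y Hy.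
have Hn := norm_ge0 (vsub y x0).
have S0 : S (f x0) by apply: HS; rewrite norm_self; apply: Hx0 Hy.
have Sy := HS y Hy.
split.
- apply: sdiff_comp1 => //; exact: Hd.
- apply: Rle_trans (Hl1 _ _ Sy S0) _.
  have := Rmult_le_compat_l L _ _ HL F2.
  have := Rmult_le_pos _ _ P1 Hn; have := Rmult_le_pos _ _ (Rmult_le_pos _ _ HSf P1) Hn. nra.
- move=> d.
  have A1 : Rabs (phi' (f y) - phi' (f x0)) <= (L * Kf) * norm (vsub y x0).
    apply: Rle_trans (Hl2 _ _ Sy S0) _; rewrite Rmult_assoc; exact: Rmult_le_compat_l.
  have := prod_lip (Hb _ Sy) A1 (F3 d).
  have := Rmult_le_compat_r _ _ _ P1 (HSf' d).
  have := Rmult_le_pos _ _ P1 Hn; have := Rmult_le_pos _ _ (Rmult_le_pos _ _ HSf P1) Hn.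
  have : (L * Kf + Rabs (Df x0 d) * (L * Kf)) * norm (vsub y x0) <= (L * Kf + Sf * (L * Kf)) * norm (vsub y x0).
    apply: Rmult_le_compat_r => //; have := Rmult_le_compat_r _ _ _ P1 (HSf' d); lra.
  nra.
- move=> Hc Hlt d; apply: scont_mul; last exact: F4.
  apply: (scont_comp (phi := phi') HL); last exact: (sdiff_cont F1).
  exists (r - norm (vsub y x0)); split; first lra.
  move=> z Hz; rewrite -Rabs_Ropp (_ : - (phi' (f z) - phi' (f y)) = phi' (f y) - phi' (f z)); last ring.
  rewrite -(Rabs_Ropp (f z - f y)) (_ : - (f z - f y) = f y - f z); last ring.
  apply: Hl2 => //; apply: HS.
  have := norm_vsub_triang z y x0; lra.
Qed.

Lemma sqrt_lip c s t : 0 < c -> c <= s -> c <= t ->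
  Rabs (sqrt s - sqrt t) * (2 * sqrt c) <= Rabs (s - t).
Proof.
move=> Hc Hs Ht.
have Hsc : sqrt c <= sqrt s by apply: sqrt_le_1_alt.
have Htc : sqrt c <= sqrt t by apply: sqrt_le_1_alt.
have Hc' : 0 < sqrt c by apply: sqrt_lt_R0.
have -> : s - t = (sqrt s - sqrt t) * (sqrt s + sqrt t).
  rewrite (_ : (sqrt s - sqrt t) * (sqrt s + sqrt t) = sqrt s * sqrt s - sqrt t * sqrt t); last ring.
  rewrite !sqrt_sqrt; lra.
rewrite Rabs_mult (Rabs_right (sqrt s + sqrt t)); last lra.
apply: Rmult_le_compat_l; [apply: Rabs_pos| lra].
Qed.

Lemma Good_sqrt r f c : 0 < c -> (forall y, norm (vsub y x0) <= r -> c <= f y) ->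
  Good cf x0 r f -> Good cf x0 r (fun y => sqrt (f y)).
Proof.
move=> Hc HS Hg.
have Hc' : 0 < sqrt c by apply: sqrt_lt_R0.
set q := sqrt c in Hc' *.
set L := / (2 * q) + / (4 * q * c) + / (2 * q).
have H4qc : 0 < 4 * q * c by apply: Rmult_lt_0_compat => //; apply: Rmult_lt_0_compat => //; lra.
have HL : 0 <= L by rewrite /L; have := Rinv_0_lt_compat (2 * q) ltac:(lra);
  have := Rinv_0_lt_compat (4 * q * c) H4qc; lra.
apply: (Good_comp (S := fun s => c <= s) (phi := sqrt) (phi' := fun s => / (2 * sqrt s)) HL HS) => //.
- move=> s Hs; apply: derivable_pt_lim_sqrt; lra.
- move=> s t Hs Ht; have := sqrt_lip Hc Hs Ht.
  have H1 : 0 < / (2 * q) by apply: Rinv_0_lt_compat; lra.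
  have H2 : 0 < / (4 * q * c) by apply: Rinv_0_lt_compat.
  move=> H; apply: (Rle_trans _ (/ (2 * q) * Rabs (s - t))).
    apply: (Rmult_le_reg_r (2 * q)); first lra.
    rewrite -/q in H; rewrite (Rmult_comm (/ (2 * q))) Rmult_assoc Rinv_l; lra.
  apply: Rmult_le_compat_r; [apply: Rabs_pos| rewrite /L; lra].
- move=> s t Hs Ht.
  have Hsq : q <= sqrt s by apply: sqrt_le_1_alt.
  have Htq : q <= sqrt t by apply: sqrt_le_1_alt.
  have E : / (2 * sqrt s) - / (2 * sqrt t) = (sqrt t - sqrt s) / (2 * sqrt s * sqrt t) by field; lra.
  rewrite E /Rdiv Rabs_mult Rabs_inv (Rabs_right (2 * sqrt s * sqrt t)); last nra.
  have Hl := sqrt_lip Hc Ht Hs; rewrite -/q in Hl.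
  rewrite -(Rabs_Ropp (s - t)) (_ : - (s - t) = t - s); last ring.
  have Hqq : 2 * q * q <= 2 * sqrt s * sqrt t by nra.
  have Hi : / (2 * sqrt s * sqrt t) <= / (2 * q * q) by apply: Rinv_le_contravar; nra.
  have : Rabs (sqrt t - sqrt s) <= Rabs (t - s) / (2 * q).
    apply: (Rmult_le_reg_r (2 * q)); first lra.
    rewrite /Rdiv Rmult_assoc Rinv_l; lra.
  move=> H3.
  apply: Rle_trans (Rmult_le_compat _ _ _ _ (Rabs_pos _) (Rlt_le _ _ (Rinv_0_lt_compat (2 * sqrt s * sqrt t) ltac:(nra))) H3 Hi) _.
  have Eq : Rabs (t - s) / (2 * q) * / (2 * q * q) = / (4 * q * c) * Rabs (t - s).
    have Hqc : q * q = c by rewrite /q sqrt_sqrt; lra.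
    rewrite -Hqc; field; lra.
  rewrite Eq; apply: Rmult_le_compat_r; [apply: Rabs_pos| ].
  have := Rinv_0_lt_compat (2 * q) ltac:(lra). rewrite /L; lra.
- move=> s Hs; have Hsq : q <= sqrt s by apply: sqrt_le_1_alt.
  rewrite Rabs_right; last by apply: Rle_ge; apply: Rlt_le; apply: Rinv_0_lt_compat; lra.
  apply: Rle_trans (_ : / (2 * q) <= _).
    apply: Rinv_le_contravar; lra.
  have H2 : 0 < / (4 * q * c) by apply: Rinv_0_lt_compat.
  rewrite /L; have := Rinv_0_lt_compat (2 * q) ltac:(lra); lra.
Qed.

Lemma Good_inv r f c : 0 < c -> (forall y, norm (vsub y x0) <= r -> c <= f y) ->
  Good cf x0 r f -> Good cf x0 r (fun y => / f y).
Proof.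
move=> Hc HS Hg.
set L := / (c * c) + 2 / (c * c * c).
have Hcc : 0 < c * c by nra.
have Hccc : 0 < c * c * c by nra.
have HL1 : 0 < / (c * c) by apply: Rinv_0_lt_compat.
have HL2 : 0 < 2 / (c * c * c) by apply: Rdiv_lt_0_compat; lra.
have HL : 0 <= L by rewrite /L; lra.
apply: (Good_comp (S := fun s => c <= s) (phi := Rinv) (phi' := fun s => - / (s * s)) HL HS) => //.
- move=> s Hs.
  have := derivable_pt_lim_div (fct_cte 1) Ranalysis1.id s 0 1 (derivable_pt_lim_const 1 s) (derivable_pt_lim_id s).
  rewrite /Ranalysis1.id; move=> /(_ ltac:(lra)) H.
  apply: (derivable_pt_lim_ext (fct_cte 1 / Ranalysis1.id)%F).
    by move=> z; rewrite /div_fct /fct_cte /Ranalysis1.id /Rdiv Rmult_1_l.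
  rewrite (_ : - / (s * s) = (0 * Ranalysis1.id s - 1 * fct_cte 1 s) / Rsqr (Ranalysis1.id s)) //.
  rewrite /Ranalysis1.id /fct_cte /Rsqr; field; lra.
- move=> s t Hs Ht.
  have E : / s - / t = (t - s) * (/ s * / t) by field; lra.
  rewrite E Rabs_mult -(Rabs_Ropp (s - t)) (_ : - (s - t) = t - s); last ring.
  rewrite (Rmult_comm L); apply: Rmult_le_compat_l; first apply: Rabs_pos.
  rewrite Rabs_right; last by apply: Rle_ge; apply: Rmult_le_pos; apply: Rlt_le; apply: Rinv_0_lt_compat; lra.
  rewrite -Rinv_mult.
  have : / (s * t) <= / (c * c) by apply: Rinv_le_contravar; nra.
  rewrite /L; lra.
- move=> s t Hs Ht.
  have E : - / (s * s) - - / (t * t) = (s - t) * ((s + t) * (/ s * / t) * (/ s * / t)) by field; lra.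
  rewrite E Rabs_mult (Rmult_comm L); apply: Rmult_le_compat_l; first apply: Rabs_pos.
  have Hi : / s * / t <= / (c * c) by rewrite -Rinv_mult; apply: Rinv_le_contravar; nra.
  have Hp : 0 < / s * / t by apply: Rmult_lt_0_compat; apply: Rinv_0_lt_compat; lra.
  have Hs' : / s <= / c by apply: Rinv_le_contravar; lra.
  have Ht' : / t <= / c by apply: Rinv_le_contravar; lra.
  have Hs0 : 0 < / s by apply: Rinv_0_lt_compat; lra.
  have Ht0 : 0 < / t by apply: Rinv_0_lt_compat; lra.
  rewrite Rabs_right; last by apply: Rle_ge; apply: Rmult_le_pos; [apply: Rmult_le_pos|]; nra.
  have -> : (s + t) * (/ s * / t) * (/ s * / t) = (/ t + / s) * (/ s * / t).
    field; lra.
  have : (/ t + / s) * (/ s * / t) <= (2 / c) * / (c * c).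
    apply: Rmult_le_compat; try lra; rewrite /Rdiv; lra.
  have -> : 2 / c * / (c * c) = 2 / (c * c * c) by field; lra.
  rewrite /L; lra.
- move=> s Hs; rewrite Rabs_Ropp Rabs_right; last by apply: Rle_ge; apply: Rlt_le; apply: Rinv_0_lt_compat; nra.
  have : / (s * s) <= / (c * c) by apply: Rinv_le_contravar; nra.
  rewrite /L; lra.
Qed.

End Comp.

Lemma choice_fun (A : Type) (B : Type) (P : A -> B -> Prop) :
  (forall a, exists b, P a b) -> exists f : A -> B, forall a, P a (f a).
Proof.
move=> H; exists (fun a => proj1_sig (constructive_indefinite_description _ (H a))).
move=> a; exact: (proj2_sig (constructive_indefinite_description _ (H a))).
Qed.

Lemma fin_small (C : finType) (P : C -> R -> Prop) :
  (forall c, exists d, 0 < d /\ forall d', 0 < d' -> d' <= d -> P c d') ->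
  exists d, 0 < d /\ forall c, P c d.
Proof.
move=> H.
suff : forall s : seq C, exists d, 0 < d /\ forall c, c \in s -> forall d', 0 < d' -> d' <= d -> P c d'.
  move=> /(_ (enum C)) [d [Hd Hs]]; exists d; split => // c.
  apply: Hs => //; [by rewrite mem_enum| lra].
elim=> [|c s [d [Hd Hs]]]; first by exists 1; split => //; lra.
have [dc [Hdc Hc]] := H c.
exists (Rmin d dc); split; first by apply: Rmin_pos.
move=> c'; rewrite in_cons => /orP [/eqP -> | Hin] d' Hd' Hle.
- apply: Hc => //; apply: Rle_trans Hle (Rmin_r _ _).
- apply: Hs => //; apply: Rle_trans Hle (Rmin_l _ _).
Qed.

Lemma rsum_pos_bound (C : finType) (K : C -> R) c : (forall c, 0 <= K c) -> K c <= rsum K.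
Proof. move=> H; exact: rsum_nonneg_le. Qed.

Section Assembly.
Variable D : finType.
Notation V := (D -> R).

Lemma sdiff_unique f x (a b : V) : sdiff f x a -> sdiff f x b -> forall d, a d = b d.
Proof.
move=> Ha Hb d.
apply: Rminus_diag_uniq.
suff : forall eps, 0 < eps -> Rabs (a d - b d) <= 2 * eps.
  move=> H; case: (Req_dec (a d - b d) 0) => // Hne.
  have Hlt := Rabs_pos_lt _ Hne.
  have := H (Rabs (a d - b d) / 4) ltac:(lra); lra.
move=> eps He.
have [d1 [Hd1 H1]] := Ha eps He; have [d2 [Hd2 H2]] := Hb eps He.
set t := Rmin d1 d2 / 2.
have Ht : 0 < t by rewrite /t; have := Rmin_pos _ _ Hd1 Hd2; lra.
set y := fun j => x j + (if j == d then t else 0).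
have Hy : norm (vsub y x) = t.
  rewrite (@norm_ext _ _ (fun j => if j == d then t else 0)); last by move=> j; rewrite /vsub /y; ring.
  rewrite norm_unit Rabs_right //; lra.
have Hlt : norm (vsub y x) < d1 /\ norm (vsub y x) < d2.
  rewrite Hy /t; have := Rmin_l d1 d2; have := Rmin_r d1 d2; have := Rmin_pos _ _ Hd1 Hd2; lra.
have A1 := H1 y (proj1 Hlt); have A2 := H2 y (proj2 Hlt).
rewrite Hy in A1 A2.
have Edot : forall (u : V), dot u (vsub y x) = t * u d.
  move=> u; rewrite /dot /rsum (bigD1 d) //= big1.
    by rewrite /vsub /y eqxx; ring.
  by move=> j /negbTE Hj; rewrite /vsub /y Hj; ring.
rewrite !Edot in A1 A2.
have : Rabs (t * (a d - b d)) <= 2 * eps * t.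
  rewrite (_ : t * (a d - b d) = - (f y - f x - t * a d) + (f y - f x - t * b d)); last ring.
  apply: Rle_trans (Rabs_triang _ _) _; rewrite Rabs_Ropp; lra.
rewrite Rabs_mult Rabs_right; last lra.
move=> H; apply: (Rmult_le_reg_l t) => //; lra.
Qed.

Lemma frechet_comp (C : finType) (f : V -> C -> R) x A :
  frechet f x A -> forall c, sdiff (fun y => f y c) x (A c).
Proof.
move=> H c eps He; have [d [Hd Hy]] := H eps He; exists d; split => // y Hyx.
apply: Rle_trans _ (Hy y Hyx).
have := comp_le_norm (vsub (vsub (f y) (f x)) (lapply A (vsub y x))) c.
by rewrite /vsub /lapply.
Qed.

Lemma frechet_of_comp (C : finType) (f : V -> C -> R) x A :
  (forall c, sdiff (fun y => f y c) x (A c)) -> frechet f x A.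
Proof.
move=> H eps He.
set e := eps / (INR #|C| + 1).
have HC := pos_INR #|C|.
have He' : 0 < e by apply: Rdiv_lt_0_compat; lra.
have Hc : forall c, exists d, 0 < d /\ forall d', 0 < d' -> d' <= d -> forall y, norm (vsub y x) < d' ->
   Rabs (f y c - f x c - dot (A c) (vsub y x)) <= e * norm (vsub y x).
  move=> c; have [d [Hd Hy]] := H c e He'; exists d; split => // d' Hd' Hle y Hyx; apply: Hy; lra.
have [d [Hd Hall]] := fin_small Hc.
exists d; split => // y Hyx.
apply: Rle_trans (norm_le_comp_bound (e := e * norm (vsub y x)) _) _.
  move=> c; exact: (Hall c y Hyx).
have Hn := norm_ge0 (vsub y x).
rewrite -Rmult_assoc; apply: Rmult_le_compat_r => //.
rewrite /e; apply: (Rmult_le_reg_r (INR #|C| + 1)); first lra.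
rewrite Rmult_assoc /Rdiv Rmult_assoc Rinv_l; lra.
Qed.

Lemma sdiff_lin (a : V) x0 x : sdiff (fun y => dot a (vsub y x0)) x a.
Proof.
move=> eps He; exists 1; split; first lra.
move=> y _.
have -> : dot a (vsub y x0) - dot a (vsub x x0) - dot a (vsub y x) = 0.
  rewrite /dot -!rsum_sub (rsum_ext (g := fun _ => 0)) ?rsum0 // => i; rewrite /vsub; ring.
rewrite Rabs0; have := norm_ge0 (vsub y x); nra.
Qed.

Lemma seg_conv (x y z : V) t : 0 <= t <= 1 ->
  norm (vsub (seg y z t) x) <= (1 - t) * norm (vsub y x) + t * norm (vsub z x).
Proof.
move=> Ht.
rewrite (@norm_ext _ _ (fun i => (1 - t) * vsub y x i + t * vsub z x i)); last first.
  by move=> i; rewrite /seg /vsub; ring.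
apply: Rle_trans (norm_triang _ _) _.
rewrite !norm_scal !Rabs_right; lra.
Qed.

End Assembly.

Section Reg.
Variable D : finType.
Notation V := (D -> R).

Lemma cont_of_comp (C : finType) (f : V -> C -> R) x :
  (forall c, scont (fun y => f y c) x) -> cont_at f x.
Proof.
move=> H eps He.
set e := eps / (INR #|C| + 1).
have HC := pos_INR #|C|.
have He' : 0 < e by apply: Rdiv_lt_0_compat; lra.
have Hc : forall c, exists d, 0 < d /\ forall d', 0 < d' -> d' <= d -> forall y, norm (vsub y x) < d' ->
   Rabs (f y c - f x c) < e.
  move=> c; have [d [Hd Hy]] := H c e He'; exists d; split => // d' Hd' Hle y Hyx; apply: Hy; lra.
have [d [Hd Hall]] := fin_small Hc.
exists d; split => // y Hyx.
apply: Rle_lt_trans (norm_le_comp_bound (e := e) _) _.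
  move=> c; exact: (Rlt_le _ _ (Hall c y Hyx)).
rewrite /e; apply: (Rmult_lt_reg_r (INR #|C| + 1)); first lra.
rewrite Rmult_assoc /Rdiv Rmult_assoc Rinv_l; lra.
Qed.

Lemma lapply_bound (C : finType) (A : C -> D -> R) h :
  norm (lapply A h) <= rsum (fun c => rsum (fun d => Rabs (A c d))) * norm h.
Proof.
apply: Rle_trans (norm_le_sum_abs _) _.
rewrite -rsum_scalr; apply: rsum_le => c; exact: abs_dot_le.
Qed.

Lemma frechet_Lp (C : finType) (f : V -> C -> R) x A : frechet f x A ->
  exists r L, 0 < r /\ 0 <= L /\
   forall y, norm (vsub y x) <= r -> norm (vsub (f y) (f x)) <= L * norm (vsub y x).
Proof.
move=> H; have [d [Hd Hy]] := H 1 Rlt_0_1.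
set M := rsum (fun c => rsum (fun d => Rabs (A c d))).
have HM : 0 <= M by apply: rsum_ge0 => c; apply: rsum_ge0 => j; apply: Rabs_pos.
exists (d / 2), (1 + M); split; first lra; split; first lra.
move=> y Hyx; have := Hy y ltac:(lra).
have := lapply_bound A (vsub y x).
have E : norm (vsub (f y) (f x)) <= norm (vsub (vsub (f y) (f x)) (lapply A (vsub y x))) + norm (lapply A (vsub y x)).
  rewrite (@norm_ext _ (vsub (f y) (f x)) (fun i => vsub (vsub (f y) (f x)) (lapply A (vsub y x)) i + lapply A (vsub y x) i)).
    exact: norm_triang.
  by move=> i; rewrite /vsub; ring.
rewrite -/M; lra.
Qed.

Lemma Good_choice (C : finType) cf x0 r0 (f : V -> C -> R) :
  (forall c, Good cf x0 r0 (fun y => f y c)) ->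
  exists (Ds : C -> V -> V) (Ks : C -> R), forall c, GoodD cf x0 r0 (fun y => f y c) (Ds c) (Ks c).
Proof.
move=> H.
have [DK HDK] := choice_fun (P := fun c (p : (V -> V) * R) => GoodD cf x0 r0 (fun y => f y c) p.1 p.2)
  (fun c => match H c with ex_intro Df (ex_intro K HK) => ex_intro _ (Df, K) HK end).
by exists (fun c => (DK c).1), (fun c => (DK c).2).
Qed.

Lemma Good_reg (C : finType) (cls : reg_class) cf x0 r0 (f : V -> C -> R) :
  0 < r0 -> (forall c, Good cf x0 r0 (fun y => f y c)) -> (cls = Defs.C1 -> cf) ->
  forall x, norm (vsub x x0) < r0 / 2 -> reg_at cls f x.
Proof.
move=> Hr0 HG Hcf x Hx.
have [Ds [Ks HDK]] := Good_choice HG.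
have Hin : forall y, norm (vsub y x) <= r0 / 2 -> norm (vsub y x0) < r0.
  move=> y Hy; have := norm_vsub_triang y x x0; lra.
have Hfr : forall y, norm (vsub y x) <= r0 / 2 -> frechet f y (fun c d => Ds c y d).
  move=> y Hy; apply: frechet_of_comp => c.
  have [_ Hc] := HDK c; have [H1 _ _ _] := Hc y (Rlt_le _ _ (Hin y Hy)); exact: H1.
have Hfx : frechet f x (fun c d => Ds c x d) by apply: Hfr; rewrite norm_self; lra.
case: cls Hcf => Hcf /=.
- apply: cont_of_comp => c.
  have [_ Hc] := HDK c; have [H1 _ _ _] := Hc x (Rlt_le _ _ (Hin x ltac:(rewrite norm_self; lra))).
  exact: sdiff_cont H1.
- exact: frechet_Lp Hfx.
- set M := rsum (fun c => rsum (fun d => Rabs (Ds c x0 d) + Ks c * r0)).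
  exists (r0 / 2), M; split; first lra.
  have HKs : forall c, 0 <= Ks c by move=> c; have [HK _] := HDK c.
  split.
    apply: rsum_ge0 => c; apply: rsum_ge0 => d; have := Rabs_pos (Ds c x0 d);
    have := Rmult_le_pos _ _ (HKs c) (Rlt_le _ _ Hr0); lra.
  move=> y z Hy Hz.
  rewrite norm_vsub_sym (norm_vsub_sym y z).
  apply: Rle_trans (norm_le_sum_abs _) _.
  rewrite /M -rsum_scalr; apply: rsum_le => c.
  have [HK Hc] := HDK c.
  rewrite /vsub.
  apply: (mvt_seg (f := fun w => f w c) (G := Ds c)).
  + move=> t Ht; have Hs := seg_conv x y z Ht.
    have := Rmult_le_compat_l (1 - t) _ _ ltac:(lra) Hy; have := Rmult_le_compat_l t _ _ ltac:(lra) Hz.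
    move=> A1 A2.
    have Hq : norm (vsub (seg y z t) x) <= r0 / 2 by lra.
    have [H1 _ _ _] := Hc (seg y z t) (Rlt_le _ _ (Hin _ Hq)); exact: H1.
  + move=> t Ht; have Hs := seg_conv x y z Ht.
    have := Rmult_le_compat_l (1 - t) _ _ ltac:(lra) Hy; have := Rmult_le_compat_l t _ _ ltac:(lra) Hz.
    move=> A1 A2.
    have Hq : norm (vsub (seg y z t) x) <= r0 / 2 by lra.
    have Hp : norm (vsub (seg y z t) x0) <= r0 by apply: Rlt_le; apply: Hin.
    apply: Rle_trans (abs_dot_le _ _) _.
    apply: Rmult_le_compat_r; first exact: norm_ge0.
    apply: rsum_le => d; have [_ _ H3 _] := Hc _ Hp.
    apply: Rle_trans (abs_sub_bound (H3 d)) _.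
    have := Rmult_le_compat_l _ _ _ HK Hp; lra.
- by exists (fun c d => Ds c x d).
- exists (r0 / 2), (fun y c d => Ds c y d); split; first lra; split.
    move=> y Hy; apply: Hfr; lra.
  apply: (cont_of_comp (C := (C * D)%type)) => [[c d]] /=.
  have [_ Hc] := HDK c.
  have [_ _ _ H4] := Hc x (Rlt_le _ _ (Hin x ltac:(rewrite norm_self; lra))).
  apply: H4; [exact: Hcf | lra].
Qed.

Lemma Good_quad (C : finType) cf x0 r0 (f : V -> C -> R) :
  0 < r0 -> (forall c, Good cf x0 r0 (fun y => f y c)) -> (forall c, f x0 c = 0) ->
  exists L, 0 < L /\
   (forall x, norm (vsub x x0) <= r0 -> reg_at C1p f x) /\
   (forall A, frechet f x0 A -> forall x, norm (vsub x x0) <= r0 ->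
      norm (vsub (f x) (lapply A (vsub x x0))) <= L * (norm (vsub x x0)) ^ 2).
Proof.
move=> Hr0 HG Hf0.
have [Ds [Ks HDK]] := Good_choice HG.
have HKs : forall c, 0 <= Ks c by move=> c; have [HK _] := HDK c.
set L := rsum (fun c => INR #|D| * Ks c) + 1.
have HL0 : 0 <= rsum (fun c => INR #|D| * Ks c).
  by apply: rsum_ge0 => c; apply: Rmult_le_pos => //; apply: pos_INR.
exists L; split; first by rewrite /L; lra.
split.
  move=> x Hx; exists (fun c d => Ds c x d); apply: frechet_of_comp => c.
  have [_ Hc] := HDK c; have [H1 _ _ _] := Hc x Hx; exact: H1.
move=> A HA x Hx.
have H0 : norm (vsub x0 x0) <= r0 by rewrite norm_self; lra.
have EA : forall c d, A c d = Ds c x0 d.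
  move=> c d; have [_ Hc] := HDK c; have [H1 _ _ _] := Hc x0 H0.
  exact: sdiff_unique (frechet_comp HA c) H1 d.
have Hn := norm_ge0 (vsub x x0).
apply: Rle_trans (norm_le_sum_abs _) _.
rewrite /L Rmult_plus_distr_r -rsum_scalr.
have : 0 <= 1 * norm (vsub x x0) ^ 2 by nra.
suff : rsum (fun i => Rabs (vsub (f x) (lapply A (vsub x x0)) i)) <=
       rsum (fun c => INR #|D| * Ks c * norm (vsub x x0) ^ 2) by lra.
apply: rsum_le => c.
have [HK Hc] := HDK c.
have E : vsub (f x) (lapply A (vsub x x0)) c =
   (f x c - dot (Ds c x0) (vsub x x0)) - (f x0 c - dot (Ds c x0) (vsub x0 x0)).
  rewrite Hf0 /vsub /lapply.
  have -> : dot (Ds c x0) (fun i => x0 i - x0 i) = 0.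
    rewrite /dot (rsum_ext (g := fun _ => 0)) ?rsum0 // => i; ring.
  rewrite /dot (rsum_ext (g := fun d => Ds c x0 d * (x d - x0 d))); first ring.
  by move=> d; rewrite EA.
rewrite E.
apply: (mvt_seg (f := fun w => f w c - dot (Ds c x0) (vsub w x0)) (G := fun p d => Ds c p d - Ds c x0 d)).
- move=> t Ht.
  have Hp : norm (vsub (seg x0 x t) x0) <= r0.
    rewrite seg_dist Rabs_right; last lra; nra.
  have [H1 _ _ _] := Hc _ Hp.
  apply: (sdiff_ext (f := fun w => f w c + -1 * dot (Ds c x0) (vsub w x0))
                    (a := fun d => Ds c (seg x0 x t) d + -1 * Ds c x0 d)).
  + by move=> w; ring.
  + by move=> d; ring.
  apply: sdiff_add => //; apply: sdiff_scal; exact: sdiff_lin.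
- move=> t Ht.
  have Hp1 : norm (vsub (seg x0 x t) x0) <= norm (vsub x x0).
    rewrite seg_dist Rabs_right; last lra; nra.
  have Hp : norm (vsub (seg x0 x t) x0) <= r0 by lra.
  apply: Rle_trans (abs_dot_le _ _) _.
  have [_ _ H3 _] := Hc _ Hp.
  have : rsum (fun d => Rabs (Ds c (seg x0 x t) d - Ds c x0 d)) <= INR #|D| * Ks c * norm (vsub x x0).
    rewrite Rmult_assoc -rsum_const; apply: rsum_le => d.
    apply: Rle_trans (H3 d) _; exact: Rmult_le_compat_l.
  move=> H; rewrite (_ : INR #|D| * Ks c * norm (vsub x x0) ^ 2 = (INR #|D| * Ks c * norm (vsub x x0)) * norm (vsub x x0)); last ring.
  exact: Rmult_le_compat_r.
Qed.

End Reg.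

Section GSalg.
Variable n : nat.
Variable row : nat -> 'I_n -> R.

Lemma jhat_eq i : jhat row i = normalize (vGS row i).
Proof. by rewrite /jhat /= eqxx. Qed.

Lemma gs_hats_lt i k : (k < i)%N -> gs_hats row i k = jhat row k.
Proof.
elim: i => [|i IH] //= Hk.
case: eqP => [->|Hne]; first by rewrite jhat_eq.
apply: IH; rewrite ltnS leq_eqVlt in Hk; case/orP: Hk => // /eqP; done.
Qed.

Lemma vGS_eq i c : vGS row i c =
  row i c - \big[Rplus/R0]_(k < i) (dot (jhat row k) (row i) * jhat row k c).
Proof.
rewrite /vGS /gs_resid; congr (_ - _); apply: eq_bigr => k _.
by rewrite gs_hats_lt.
Qed.

Lemma cGS_diag i : cGS row i i = norm (vGS row i).
Proof. by rewrite /cGS ltnn eqxx. Qed.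

Lemma cGS_lt i k : (k < i)%N -> cGS row i k = dot (jhat row k) (row i).
Proof. by rewrite /cGS => ->. Qed.

Lemma cGS_gt i k : (i < k)%N -> cGS row i k = 0.
Proof.
move=> H; rewrite /cGS ltnNge (ltnW H) /=.
by rewrite eq_sym (ltn_eqF H).
Qed.

Lemma normalize_pos (v : 'I_n -> R) c : 0 < norm v -> normalize v c = v c / norm v.
Proof. by move=> H; rewrite /normalize; case: Rlt_dec. Qed.

Lemma cv_eq i c : cGS row i i * jhat row i c = vGS row i c.
Proof.
rewrite cGS_diag jhat_eq /normalize.
case: Rlt_dec => H /=.
  field; lra.
have H0 : norm (vGS row i) = 0 by have := norm_ge0 (vGS row i); lra.
have := comp_le_norm (vGS row i) c; rewrite H0 => Hc.
have : vGS row i c = 0 by have := Rabs_pos (vGS row i c); move: Hc; case: (Rcase_abs (vGS row i c)) => Hs;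
  [rewrite Rabs_left // | rewrite Rabs_right //]; lra.
move=> ->; ring.
Qed.

End GSalg.

Section GSgood.
Variable D : finType.
Notation V := (D -> R).
Variable cf : Prop.
Variable x0 : V.
Variable n : nat.
Variable row : V -> nat -> 'I_n -> R.
Variable r0 : R.
Hypothesis Hr0 : 0 < r0.
Hypothesis Hrow : forall i j, Good cf x0 r0 (fun y => row y i j).

Lemma sdiff_ext_loc (f g : V -> R) x a d : 0 < d ->
  (forall y, norm (vsub y x) < d -> f y = g y) -> sdiff f x a -> sdiff g x a.
Proof.
move=> Hd E H eps He; have [d1 [Hd1 H1]] := H eps He.
exists (Rmin d d1); split; first by apply: Rmin_pos.
move=> y Hy; rewrite -E; last by apply: Rlt_le_trans Hy (Rmin_l _ _).
rewrite -(E x); last by rewrite norm_self.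
apply: H1; apply: Rlt_le_trans Hy (Rmin_r _ _).
Qed.

Lemma Good_ext_loc r f g : 0 < r -> (forall y, norm (vsub y x0) <= r -> f y = g y) ->
  Good cf x0 r f -> Good cf x0 (r / 2) g.
Proof.
move=> Hr E [Df [K [HK H]]]; exists Df, K; split => // y Hy.
have Hy' : norm (vsub y x0) <= r by lra.
have [H1 H2 H3 H4] := H y Hy'; split => //.
- apply: (sdiff_ext_loc (d := r / 2)) H1; first lra.
  move=> z Hz; apply: E; have := norm_vsub_triang z y x0; lra.
- rewrite -!E //; rewrite norm_self; lra.
- move=> Hc Hlt; apply: H4 => //; lra.
Qed.

Lemma Good_dot r (u w : V -> 'I_n -> R) :
  (forall j, Good cf x0 r (fun y => u y j)) -> (forall j, Good cf x0 r (fun y => w y j)) ->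
  Good cf x0 r (fun y => dot (u y) (w y)).
Proof.
move=> Hu Hw; rewrite /dot /rsum.
apply: (@Good_big _ _ _ _ _ _ _ (fun j y => u y j * w y j)) => j _; exact: Good_mul.
Qed.

Definition GSconc N r c :=
  0 < r /\ r <= r0 /\ 0 < c /\ forall k, (k < N)%N ->
   (forall y, norm (vsub y x0) <= r -> c <= norm (vGS (row y) k)) /\
   forall j, Good cf x0 r (fun y => jhat (row y) k j).

Lemma GS_v_good N r c : GSconc N r c -> forall j, Good cf x0 r (fun y => vGS (row y) N j).
Proof.
move=> [Hr [Hrr [Hc H]]] j.
apply: (Good_ext (f := fun y => row y N j - \big[Rplus/R0]_(k < N) (dot (jhat (row y) k) (row y N) * jhat (row y) k j))).
  by move=> y; rewrite vGS_eq.
apply: Good_sub; first exact: (Good_mono Hrr).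
apply: (@Good_big _ _ _ _ _ _ _ (fun (k : 'I_N) y => dot (jhat (row y) k) (row y N) * jhat (row y) k j)) => k _.
have [_ Hk] := H k (ltn_ord k).
apply: Good_mul => //; apply: Good_dot => // j'; exact: (Good_mono Hrr).
Qed.

Lemma GS_norm_good N r c : GSconc N r c -> forall k, (k < N)%N ->
  Good cf x0 r (fun y => norm (vGS (row y) k)).
Proof.
move=> HC k Hk.
have [Hr [Hrr [Hc H]]] := HC.
have HCk : GSconc k r c.
  split => //; split => //; split => // k' Hk'; apply: H; exact: ltn_trans Hk' Hk.
have Hv := GS_v_good HCk.
apply: (Good_sqrt (c := c * c)); first nra.
  move=> y Hy; have [Hlow _] := H k Hk; have := Hlow y Hy; rewrite -norm_sq; nra.
exact: Good_dot.
Qed.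

Lemma GS_good N : (forall k, (k < N)%N -> 0 < norm (vGS (row x0) k)) ->
  exists r c, GSconc N r c.
Proof.
elim: N => [|N IH] Hpos.
  exists r0, 1; split => //; split; first lra; split; first lra; by [].
have [r [c HC]] := IH (fun k Hk => Hpos k (ltnW Hk)).
have [Hr [Hrr [Hc H]]] := HC.
have Hv := GS_v_good HC.
have Hd : Good cf x0 r (fun y => dot (vGS (row y) N) (vGS (row y) N)) by apply: Good_dot.
have HP : 0 < dot (vGS (row x0) N) (vGS (row x0) N).
  rewrite -norm_sq; have := Hpos N (ltnSn N); nra.
have [r1 [Hr1 [Hr1r Hlow]]] := Good_pos Hr Hd HP.
set P := dot (vGS (row x0) N) (vGS (row x0) N) in HP Hlow.
have HP2 : 0 < P / 2 by lra.
have Hd1 := Good_mono Hr1r Hd.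
have Hn1 : Good cf x0 r1 (fun y => norm (vGS (row y) N)) by apply: (Good_sqrt HP2).
have Hnl : forall y, norm (vsub y x0) <= r1 -> sqrt (P / 2) <= norm (vGS (row y) N).
  by move=> y Hy; apply: sqrt_le_1_alt; apply: Hlow.
have Hsq : 0 < sqrt (P / 2) by apply: sqrt_lt_R0.
have Hinv : Good cf x0 r1 (fun y => / norm (vGS (row y) N)) by apply: (Good_inv Hsq).
exists (r1 / 2), (Rmin c (sqrt (P / 2))).
split; first lra; split; first lra; split; first by apply: Rmin_pos.
move=> k; rewrite ltnS leq_eqVlt => /orP [/eqP -> | Hk].
- split.
    move=> y Hy; apply: Rle_trans (Rmin_r _ _) _; apply: Hnl; lra.
  move=> j.
  apply: (Good_ext_loc (f := fun y => vGS (row y) N j * / norm (vGS (row y) N))) => //.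
    move=> y Hy; rewrite jhat_eq normalize_pos //; have := Hnl y Hy; lra.
  apply: Good_mul => //; exact: (Good_mono Hr1r).
- have [Hl Hg] := H k Hk; split.
    move=> y Hy; apply: Rle_trans (Rmin_l _ _) _; apply: Hl; lra.
  move=> j; apply: (Good_mono (r := r)); [lra | exact: Hg].
Qed.

End GSgood.

Section Base.
Variable D : finType.
Notation V := (D -> R).

Lemma Good_base cf x0 (f : V -> R) (Df : V -> V) rho rL KL :
  0 < rho -> 0 < rL -> 0 <= KL ->
  (forall y, norm (vsub y x0) < rho -> sdiff f y (Df y)) ->
  (forall y, norm (vsub y x0) <= rL -> forall d, Rabs (Df y d - Df x0 d) <= KL * norm (vsub y x0)) ->
  (cf -> forall y, norm (vsub y x0) < rho -> forall d, scont (fun z => Df z d) y) ->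
  Good cf x0 (Rmin (rho / 2) rL) f.
Proof.
move=> Hrho HrL HKL Hd HL Hc.
set r := Rmin (rho / 2) rL.
have Hr1 : r <= rho / 2 by apply: Rmin_l.
have Hr2 : r <= rL by apply: Rmin_r.
have Hr : 0 < r by apply: Rmin_pos; lra.
set B := rsum (fun d => Rabs (Df x0 d) + KL * r).
exists Df, (KL + B); split.
  have : 0 <= B by apply: rsum_ge0 => d; have := Rabs_pos (Df x0 d); have := Rmult_le_pos _ _ HKL (Rlt_le _ _ Hr); lra.
  lra.
move=> y Hy.
have HB : 0 <= B by apply: rsum_ge0 => d; have := Rabs_pos (Df x0 d); have := Rmult_le_pos _ _ HKL (Rlt_le _ _ Hr); lra.
have Hn := norm_ge0 (vsub y x0).
split.
- apply: Hd; lra.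
- have : Rabs (f y - f x0) <= B * norm (vsub y x0).
    apply: (mvt_seg (G := Df)).
      move=> t Ht; apply: Hd; rewrite seg_dist Rabs_right; last lra.
      have : t * norm (vsub y x0) <= norm (vsub y x0) by nra.
      lra.
    move=> t Ht.
    have Hp : norm (vsub (seg x0 y t) x0) <= r.
      rewrite seg_dist Rabs_right; last lra.
      have : t * norm (vsub y x0) <= norm (vsub y x0) by nra.
      lra.
    apply: Rle_trans (abs_dot_le _ _) _.
    apply: Rmult_le_compat_r => //; apply: rsum_le => d.
    apply: Rle_trans (abs_sub_bound (HL (seg x0 y t) ltac:(lra) d)) _.
    have := Rmult_le_compat_l _ _ _ HKL Hp; lra.
  have := Rmult_le_pos _ _ HKL Hn; lra.
- move=> d; apply: Rle_trans (HL y ltac:(lra) d) _.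
  have := Rmult_le_pos _ _ HB Hn; lra.
- move=> Hcf Hlt d; apply: Hc => //; lra.
Qed.

End Base.

Lemma exists_min (P : nat -> Prop) : (exists k, P k) ->
  exists k, P k /\ forall j, (j < k)%N -> ~ P j.
Proof.
move=> [k Hk].
suff : forall N k, (k <= N)%N -> P k -> exists k', P k' /\ forall j, (j < k')%N -> ~ P j.
  by move=> /(_ k k (leqnn k) Hk).
elim=> [|N IH] k' Hle Pk.
  exists k'; split => // j Hj; move: Hle; rewrite leqn0 => /eqP Hk0; by rewrite Hk0 in Hj.
case: (classic (exists j, (j < k')%N /\ P j)) => [[j [Hj Pj]] | Hno].
  have Hj' : (j <= N)%N by rewrite -ltnS; exact: leq_trans Hj Hle.
  exact: (IH j Hj' Pj).
exists k'; split => // j Hj Pj; apply: Hno; by exists j.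
Qed.


Lemma rsum_exchange (I J : finType) (F : I -> J -> R) :
  rsum (fun i => rsum (fun j => F i j)) = rsum (fun j => rsum (fun i => F i j)).
Proof. by rewrite /rsum exchange_big. Qed.

Definition Mnorm p q (A : 'I_p -> 'I_q -> R) := rsum (fun i => rsum (fun j => Rabs (A i j))).
Definition msub p q (A B : 'I_p -> 'I_q -> R) : 'I_p -> 'I_q -> R := fun i j => A i j - B i j.

Lemma Mnorm_ge0 p q (A : 'I_p -> 'I_q -> R) : 0 <= Mnorm A.
Proof. apply: rsum_ge0 => i; apply: rsum_ge0 => j; apply: Rabs_pos. Qed.

Lemma Mnorm_entry p q (A : 'I_p -> 'I_q -> R) i j : Rabs (A i j) <= Mnorm A.
Proof.
apply: Rle_trans (_ : rsum (fun j => Rabs (A i j)) <= _).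
  by apply: rsum_nonneg_le => j'; apply: Rabs_pos.
apply: (rsum_nonneg_le (f := fun i => rsum (fun j => Rabs (A i j)))) => i'.
by apply: rsum_ge0 => j'; apply: Rabs_pos.
Qed.

Lemma Mnorm_mul p q s (A : 'I_p -> 'I_q -> R) (B : 'I_q -> 'I_s -> R) :
  Mnorm (matmul A B) <= Mnorm A * Mnorm B.
Proof.
rewrite /Mnorm /matmul -rsum_scalr; apply: rsum_le => i.
apply: Rle_trans (_ : rsum (fun j => rsum (fun k => Rabs (A i k) * Rabs (B k j))) <= _).
  apply: rsum_le => j; apply: Rle_trans (rsum_abs _) _; apply: rsum_le => k.
  rewrite Rabs_mult; lra.
rewrite rsum_exchange -rsum_scalr; apply: rsum_le => k.
rewrite rsum_scal; apply: Rmult_le_compat_l; first exact: Rabs_pos.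
apply: (rsum_nonneg_le (f := fun k => rsum (fun j => Rabs (B k j)))) => k'.
by apply: rsum_ge0 => j'; apply: Rabs_pos.
Qed.

Lemma matmul_assoc p q s t (A : 'I_p -> 'I_q -> R) (B : 'I_q -> 'I_s -> R) (C : 'I_s -> 'I_t -> R) :
  matmul (matmul A B) C = matmul A (matmul B C).
Proof.
apply: functional_extensionality => i; apply: functional_extensionality => j.
rewrite /matmul.
rewrite (rsum_ext (f := fun l => rsum (fun k => A i k * B k l) * C l j)
                  (g := fun l => rsum (fun k => A i k * B k l * C l j))); last first.
  by move=> l; rewrite rsum_scalr.
rewrite rsum_exchange; apply: rsum_ext => k; rewrite -rsum_scal; apply: rsum_ext => l; ring.
Qed.

Lemma matmul_id_r p q (A : 'I_p -> 'I_q -> R) : matmul A (idm q) = A.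
Proof.
apply: functional_extensionality => i; apply: functional_extensionality => j.
rewrite /matmul /idm /rsum (bigD1 j) //= eqxx big1; first ring.
by move=> k /negbTE ->; ring.
Qed.

Lemma matmul_id_l p q (A : 'I_p -> 'I_q -> R) : matmul (idm p) A = A.
Proof.
apply: functional_extensionality => i; apply: functional_extensionality => j.
rewrite /matmul /idm /rsum (bigD1 i) //= eqxx big1; first ring.
by move=> k; rewrite eq_sym => /negbTE ->; ring.
Qed.

Lemma matmul_subr p q s (A : 'I_p -> 'I_q -> R) (B C : 'I_q -> 'I_s -> R) :
  matmul A (msub B C) = msub (matmul A B) (matmul A C).
Proof.
apply: functional_extensionality => i; apply: functional_extensionality => j.
by rewrite /matmul /msub -rsum_sub; apply: rsum_ext => k; ring.
Qed.

Lemma matmul_subl p q s (A B : 'I_p -> 'I_q -> R) (C : 'I_q -> 'I_s -> R) :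
  matmul (msub A B) C = msub (matmul A C) (matmul B C).
Proof.
apply: functional_extensionality => i; apply: functional_extensionality => j.
by rewrite /matmul /msub -rsum_sub; apply: rsum_ext => k; ring.
Qed.

Lemma scont_ext_loc (D : finType) (f g : (D -> R) -> R) y d : 0 < d ->
  (forall z, norm (vsub z y) < d -> f z = g z) -> scont g y -> scont f y.
Proof.
move=> Hd E H eps He; have [d1 [Hd1 H1]] := H eps He.
exists (Rmin d d1); split; first by apply: Rmin_pos.
move=> z Hz; rewrite E; last by apply: Rlt_le_trans Hz (Rmin_l _ _).
rewrite E; last by rewrite norm_self.
apply: H1; apply: Rlt_le_trans Hz (Rmin_r _ _).
Qed.

Lemma inv_cont (D : finType) p (A B : (D -> R) -> 'I_p -> 'I_p -> R) y :
  (forall z, matmul (A z) (B z) = idm p /\ matmul (B z) (A z) = idm p) ->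
  (forall i j, scont (fun z => A z i j) y) -> forall i j, scont (fun z => B z i j) y.
Proof.
move=> Hinv HA i j eps He.
set beta := Mnorm (B y).
have Hb : 0 <= beta := Mnorm_ge0 (B y).
set P := (INR #|'I_p| * INR #|'I_p| + 1).
have HP : 0 < P by rewrite /P; have := pos_INR #|'I_p|; nra.
set e := Rmin (/ (2 * (beta + 1) * P)) (eps / (2 * (beta * beta + 1) * P)).
have He1 : 0 < / (2 * (beta + 1) * P) by apply: Rinv_0_lt_compat; nra.
have He2 : 0 < eps / (2 * (beta * beta + 1) * P).
  apply: Rdiv_lt_0_compat => //; apply: Rmult_lt_0_compat => //; nra.
have He0 : 0 < e by apply: Rmin_pos.
have Hc : forall ij : 'I_p * 'I_p, exists d, 0 < d /\ forall d', 0 < d' -> d' <= d ->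
   forall z, norm (vsub z y) < d' -> Rabs (A z ij.1 ij.2 - A y ij.1 ij.2) < e.
  move=> [k l]; have [d [Hd H]] := HA k l e He0; exists d; split => // d' Hd' Hle z Hz; apply: H; lra.
have [d [Hd Hall]] := fin_small Hc.
exists d; split => // z Hz.
set dA := msub (A y) (A z).
have HdA : Mnorm dA <= INR #|'I_p| * (INR #|'I_p| * e).
  rewrite /Mnorm -!rsum_const; apply: rsum_le => k; apply: rsum_le => l.
  have := Hall (k, l) z Hz; rewrite /dA /msub /= => H.
  rewrite -Rabs_Ropp (_ : - (A y k l - A z k l) = A z k l - A y k l); last ring. lra.
have E : matmul (matmul (B z) dA) (B y) = msub (B z) (B y).
  rewrite /dA matmul_subr matmul_subl.
  have [H1 _] := Hinv y; have [_ H2] := Hinv z.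
  rewrite matmul_assoc H1 matmul_id_r H2 matmul_id_l //.
set M := Mnorm (msub (B z) (B y)).
have HBz : Mnorm (B z) <= beta + M.
  rewrite /Mnorm /beta /M /Mnorm -rsum_add; apply: rsum_le => k; rewrite -rsum_add; apply: rsum_le => l.
  rewrite /msub; have := Rabs_triang (B y k l) (B z k l - B y k l).
  by rewrite (_ : B y k l + (B z k l - B y k l) = B z k l); last ring.
have HM : M <= (beta + M) * Mnorm dA * beta.
  apply: (Rle_trans _ (Mnorm (B z) * Mnorm dA * beta)).
    rewrite /M -E.
    apply: Rle_trans (Mnorm_mul _ _) _.
    apply: Rmult_le_compat_r => //.
    exact: Mnorm_mul.
  apply: Rmult_le_compat_r => //; apply: Rmult_le_compat_r => //; exact: Mnorm_ge0.
have Hde : Mnorm dA <= P * e.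
  apply: Rle_trans HdA _; rewrite /P; have := pos_INR #|'I_p|; nra.
have Hd1 : Mnorm dA * (beta + 1) <= / 2.
  have : P * e * (beta + 1) <= / 2.
    have : e <= / (2 * (beta + 1) * P) by apply: Rmin_l.
    move=> H; have := Rmult_le_compat_l (P * (beta + 1)) _ _ ltac:(nra) H.
    have -> : P * (beta + 1) * / (2 * (beta + 1) * P) = / 2 by field; lra.
    nra.
  have := Rmult_le_compat_r (beta + 1) _ _ ltac:(lra) Hde; lra.
have HM0 := Mnorm_ge0 (msub (B z) (B y)); rewrite -/M in HM0.
have HdA0 := Mnorm_ge0 dA.
have HM2 : M <= 2 * beta * beta * Mnorm dA.
  have : M * (1 - Mnorm dA * beta) <= beta * Mnorm dA * beta by nra.
  have : Mnorm dA * beta <= / 2 by nra.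
  nra.
have Hfin : 2 * beta * beta * Mnorm dA < eps.
  have : e <= eps / (2 * (beta * beta + 1) * P) by apply: Rmin_r.
  move=> H.
  have H' : P * e <= eps / (2 * (beta * beta + 1)).
    have := Rmult_le_compat_l P _ _ (Rlt_le _ _ HP) H.
    have -> : P * (eps / (2 * (beta * beta + 1) * P)) = eps / (2 * (beta * beta + 1)) by field; nra.
    done.
  have : Mnorm dA <= eps / (2 * (beta * beta + 1)) by lra.
  move=> H2; have := Rmult_le_compat_l (2 * beta * beta) _ _ ltac:(nra) H2.
  have : 2 * beta * beta * (eps / (2 * (beta * beta + 1))) < eps.
    have -> : 2 * beta * beta * (eps / (2 * (beta * beta + 1))) = eps * (beta * beta / (beta * beta + 1)) by field; nra.
    have : beta * beta / (beta * beta + 1) < 1.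
      apply: (Rmult_lt_reg_r (beta * beta + 1)); first nra.
      rewrite /Rdiv Rmult_assoc Rinv_l; nra.
    nra.
  lra.
have := Mnorm_entry (msub (B z) (B y)) i j; rewrite /msub -/M; lra.
Qed.

Lemma cont_at_comp (D C : finType) (f : (D -> R) -> C -> R) y :
  cont_at f y -> forall c, scont (fun z => f z c) y.
Proof.
move=> H c eps He; have [d [Hd H1]] := H eps He; exists d; split => // z Hz.
apply: Rle_lt_trans (H1 z Hz).
have := comp_le_norm (vsub (f z) (f y)) c; by rewrite /vsub.
Qed.

Lemma JRm_id m n (F : X n -> 'I_m -> 'I_n.+1 -> R) (Rm Rinv : X n -> 'I_n -> 'I_n -> R) z i j :
  (matmul (Rinv z) (Rm z) = idm n) ->
  rsum (fun l => Jmat F Rinv z i l * Rm z l j) = F z i (lift ord0 j).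
Proof.
move=> H.
have : matmul (Jmat F Rinv z) (Rm z) = Fq F z.
  by rewrite /Jmat matmul_assoc H matmul_id_r.
by move=> /(congr1 (fun M => M i j)).
Qed.

Lemma DJ_cont m n (F : X n -> 'I_m -> 'I_n.+1 -> R) (Rm Rinv : X n -> 'I_n -> 'I_n -> R)
  (DJ : X n -> ('I_m * 'I_n)%type -> 'I_n.+1 -> R) (y : X n) d0 :
  (forall x, matmul (Rm x) (Rinv x) = idm n /\ matmul (Rinv x) (Rm x) = idm n) ->
  reg_at Defs.C1 (uncurry_map F) y -> reg_at Defs.C1 (uncurry_map Rm) y -> 0 < d0 ->
  (forall z, norm (vsub z y) < d0 -> frechet (uncurry_map (Jmat F Rinv)) z (DJ z)) ->
  forall p d, scont (fun z => DJ z p d) y.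
Proof.
move=> Hinv [rF [DF [HrF [HfF HcF]]]] [rR [DR [HrR [HfR HcR]]]] Hd0 HfJ [i l'] d.
set J := Jmat F Rinv.
set dl := Rmin d0 (Rmin rF rR).
have Hdl : 0 < dl by rewrite /dl; repeat apply: Rmin_pos.
have Hz0 : forall z, norm (vsub z y) < dl -> norm (vsub z y) < d0 /\ norm (vsub z y) < rF /\ norm (vsub z y) < rR.
  move=> z Hz; have := Rmin_l d0 (Rmin rF rR); have := Rmin_r d0 (Rmin rF rR);
  have := Rmin_l rF rR; have := Rmin_r rF rR; rewrite -/dl; lra.
have Hstar : forall z, norm (vsub z y) < dl -> forall i j d,
   rsum (fun l => J z i l * DR z (l, j) d + Rm z l j * DJ z (i, l) d) = DF z (i, lift ord0 j) d.
  move=> z Hz i0 j d1; have [Hz1 [Hz2 Hz3]] := Hz0 z Hz.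
  have H1 : sdiff (fun w => rsum (fun l => J w i0 l * Rm w l j)) z
       (fun d => rsum (fun l => J z i0 l * DR z (l, j) d + Rm z l j * DJ z (i0, l) d)).
    rewrite /rsum.
    apply: (@sdiff_big _ _ _ _ (fun l w => J w i0 l * Rm w l j)
              (fun l d => J z i0 l * DR z (l, j) d + Rm z l j * DJ z (i0, l) d)) => l _.
    apply: sdiff_mul.
    - exact: (frechet_comp (HfJ z Hz1) (i0, l)).
    - exact: (frechet_comp (HfR z Hz3) (l, j)).
  have H2 : sdiff (fun w => rsum (fun l => J w i0 l * Rm w l j)) z (DF z (i0, lift ord0 j)).
    apply: (sdiff_ext (f := fun w => uncurry_map F w (i0, lift ord0 j))).
    - move=> w; rewrite /J JRm_id //; by have [_ ->] := Hinv w.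
    - by [].
    exact: (frechet_comp (HfF z Hz2) (i0, lift ord0 j)).
  exact: (sdiff_unique H1 H2 d1).
set Phi := fun z => rsum (fun j => (DF z (i, lift ord0 j) d + -1 * rsum (fun l => J z i l * DR z (l, j) d)) * Rinv z j l').
have Hform : forall z, norm (vsub z y) < dl -> DJ z (i, l') d = Phi z.
  move=> z Hz; rewrite /Phi.
  rewrite (rsum_ext (g := fun j => rsum (fun l => DJ z (i, l) d * (Rm z l j * Rinv z j l')))); last first.
    move=> j; rewrite -(Hstar z Hz i j d) rsum_add.
    set S1 := rsum (fun l => J z i l * DR z (l, j) d).
    have -> : (S1 + rsum (fun l => Rm z l j * DJ z (i, l) d) + -1 * S1) * Rinv z j l' =
       rsum (fun l => Rm z l j * DJ z (i, l) d) * Rinv z j l' by ring.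
    rewrite -rsum_scalr; apply: rsum_ext => l; ring.
  rewrite rsum_exchange.
  rewrite (rsum_ext (g := fun l => DJ z (i, l) d * idm n l l')); last first.
    move=> l; rewrite rsum_scal; congr (_ * _).
    by have [H _] := Hinv z; move: H => /(congr1 (fun M => M l l')).
  rewrite /rsum (bigD1 l') //= /idm eqxx big1; first ring.
  by move=> l /negbTE ->; ring.
apply: (scont_ext_loc Hdl Hform).
rewrite /Phi /rsum.
apply: (@scont_big _ _ _ _ (fun j z => (DF z (i, lift ord0 j) d + -1 * rsum (fun l => J z i l * DR z (l, j) d)) * Rinv z j l')) => j _.
have HJc : forall l, scont (fun z => J z i l) y.
  move=> l; apply: (sdiff_cont (a := DJ y (i, l))).
  exact: (frechet_comp (HfJ y ltac:(rewrite norm_self; lra)) (i, l)).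
have HRc : forall a b, scont (fun z => Rm z a b) y.
  move=> a b; apply: (sdiff_cont (a := DR y (a, b))).
  exact: (frechet_comp (HfR y ltac:(rewrite norm_self; lra)) (a, b)).
apply: scont_mul; last exact: (inv_cont Hinv HRc).
apply: scont_add.
  exact: (cont_at_comp HcF ((i, lift ord0 j), d)).
apply: scont_mul; first exact: scont_const.
rewrite /rsum.
apply: (@scont_big _ _ _ _ (fun l z => J z i l * DR z (l, j) d)) => l _.
apply: scont_mul; first exact: HJc.
exact: (cont_at_comp HcR ((l, j), d)).
Qed.

Lemma dot_zero_r (I : finType) (u : I -> R) : dot u (fun _ => 0) = 0.
Proof. rewrite /dot (rsum_ext (g := fun _ => 0)) ?rsum0 // => i; ring. Qed.

Lemma vGS_zero n (row : nat -> 'I_n -> R) i : (forall c, row i c = 0) -> forall c, vGS row i c = 0.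
Proof.
move=> H c; rewrite vGS_eq H.
rewrite big1; first ring.
move=> k _; rewrite (_ : row i = fun _ => 0); last by apply: functional_extensionality.
by rewrite dot_zero_r; ring.
Qed.

Lemma jhat_zero n (row : nat -> 'I_n -> R) i : (forall c, row i c = 0) -> forall c, jhat row i c = 0.
Proof.
move=> H c; rewrite jhat_eq /normalize.
have E : vGS row i = fun _ => 0 by apply: functional_extensionality; exact: vGS_zero.
rewrite E norm_zero; case: Rlt_dec => // Hlt; lra.
Qed.

Lemma cdiag_zero n (row : nat -> 'I_n -> R) i : (forall c, row i c = 0) -> cGS row i i = 0.
Proof.
move=> H; rewrite cGS_diag.
have E : vGS row i = fun _ => 0 by apply: functional_extensionality; exact: vGS_zero.
by rewrite E norm_zero.
Qed.

Unset Implicit Arguments. Set Strict Implicit.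

Theorem lemma15 (cls : reg_class) (m n : nat) (ms : list nat)
  (Hl : (2 <= length ms)%N)
  (Hms : Forall (fun k => (1 <= k)%N) ms)
  (Hm : m = list_sum ms) (Hmn : (m <= n)%N)
  (F : X n -> 'I_m -> 'I_n.+1 -> R)
  (Rm Rinv : X n -> 'I_n -> 'I_n -> R)
  (r : X n -> 'I_m -> R)
  (HRinv : forall x, matmul (Rm x) (Rinv x) = idm n /\ matmul (Rinv x) (Rm x) = idm n)
  (Hcont : kin_cont cls F Rm r)
  (x0 : X n)
  (Hx0 : ~ in_interior (inG cls ms (Jmat F Rinv)) x0)
  (HJ : exists rho (DJ : X n -> ('I_m * 'I_n)%type -> 'I_n.+1 -> R), 0 < rho /\
          (forall x, norm (vsub x x0) < rho -> frechet (uncurry_map (Jmat F Rinv)) x (DJ x)) /\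
          reg_at C0 (uncurry_map DJ) x0 /\
          reg_at CLp (uncurry_map DJ) x0) :
  exists (a : 'I_m) (rr L : R), 0 < rr /\ 0 < L /\
    let row := fun x => rows_of (Jmat F Rinv x) in
    let g := fun x c => cGS (row x) a a * jhat (row x) a c in
    cGS (row x0) a a = 0 /\
    (forall x, norm (vsub x x0) <= rr -> reg_at C1p g x) /\
    (forall A, frechet g x0 A ->
       forall x, norm (vsub x x0) <= rr ->
         norm (vsub (g x) (lapply A (vsub x x0))) <= L * (norm (vsub x x0))^2).
Proof.
have [rho [DJ [Hrho [HfJ [_ HLp]]]]] := HJ.
have [rL [KL [HrL [HKL HLp']]]] := HLp.
set J := Jmat F Rinv.
pose row := fun y => rows_of (J y).
pose cf := (cls = Defs.C1).
have HC1 : cf -> forall y, norm (vsub y x0) < rho -> forall p d, scont (fun z => DJ z p d) y.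
  move=> Hc y Hy p d; have [HF [HR _]] := Hcont y; rewrite Hc in HF HR.
  apply: (@DJ_cont m n F Rm Rinv DJ y (rho - norm (vsub y x0)) HRinv HF HR); first lra.
  move=> z Hz; apply: HfJ; have := norm_vsub_triang z y x0; lra.
set r0 := Rmin (rho / 2) rL.
have Hr0 : 0 < r0 by apply: Rmin_pos; lra.
have Hrow : forall i j, Good cf x0 r0 (fun y => row y i j).
  move=> i j; case Hi : (i < m)%N.
  - pose o := Ordinal Hi.
    have E : forall y, J y o j = row y i j.
      by move=> y; rewrite /row /rows_of insubT.
    apply: (Good_ext E).
    apply: (Good_base (Df := fun y d => DJ y (o, j) d) (rho := rho) (rL := rL) (KL := KL)) => //.
    + move=> y Hy; exact: (frechet_comp (HfJ y Hy) (o, j)).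
    + move=> y Hy d; apply: Rle_trans (HLp' y Hy).
      have := comp_le_norm (vsub (uncurry_map DJ y) (uncurry_map DJ x0)) ((o, j), d).
      by rewrite /vsub.
    + move=> Hc y Hy d; exact: (HC1 Hc y Hy (o, j) d).
  - have E : forall y, 0 = row y i j.
      by move=> y; rewrite /row /rows_of insubF.
    apply: (Good_ext E); exact: Good_const.
have Hrow0 : forall y i, (m <= i)%N -> forall c, row y i c = 0.
  move=> y i Hi c; rewrite /row /rows_of insubF //; by rewrite ltnNge Hi.
case: (classic (exists k, (k < m)%N /\ norm (vGS (row x0) k) = 0)) => [Hex | Hno].
-
  have [a [[Ha Ha0] Hmin]] := exists_min Hex.
  have Hpos : forall k, (k < a)%N -> 0 < norm (vGS (row x0) k).
    move=> k Hk; have := norm_ge0 (vGS (row x0) k).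
    case: (Req_dec (norm (vGS (row x0) k)) 0) => H0 H1; last lra.
    exfalso; apply: (Hmin k Hk); split => //; exact: ltn_trans Hk Ha.
  have [rr [c HC]] := GS_good Hr0 Hrow Hpos.
  have [Hrr [Hrr0 _]] := HC.
  have Hv := GS_v_good Hrow HC.
  pose g := fun y c => cGS (row y) a a * jhat (row y) a c.
  have Hg : forall c, Good cf x0 rr (fun y => g y c).
    move=> c0; apply: (Good_ext (f := fun y => vGS (row y) a c0)) (Hv c0).
    by move=> y; rewrite /g cv_eq.
  have Hg0 : forall c, g x0 c = 0.
    move=> c0; rewrite /g cv_eq.
    have := comp_le_norm (vGS (row x0) a) c0; rewrite Ha0 => H.
    have := Rabs_pos (vGS (row x0) a c0).
    case: (Rcase_abs (vGS (row x0) a c0)) => Hs; [rewrite Rabs_left // in H | rewrite Rabs_right // in H]; lra.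
  have [L [HL [HC1p Hquad]]] := Good_quad Hrr Hg Hg0.
  exists (Ordinal Ha), rr, L; split => //; split => //.
  split; last split.
  + by rewrite cGS_diag.
  + exact: HC1p.
  + exact: Hquad.
-
  exfalso; apply: Hx0.
  have Hpos : forall k, (k < m)%N -> 0 < norm (vGS (row x0) k).
    move=> k Hk; have := norm_ge0 (vGS (row x0) k).
    case: (Req_dec (norm (vGS (row x0) k)) 0) => H0 H1; last lra.
    exfalso; apply: Hno; by exists k.
  have [rr [c HC]] := GS_good Hr0 Hrow Hpos.
  have [Hrr [Hrr0 [Hc HCk]]] := HC.
  have GJ : forall k j, Good cf x0 rr (fun y => jhat (row y) k j).
    move=> k j; case Hk : (k < m)%N.
      by have [_ H] := HCk k Hk; apply: H.
    apply: (Good_ext (f := fun _ => 0)); last exact: Good_const.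
    move=> y; rewrite jhat_zero //; apply: Hrow0; by rewrite leqNgt Hk.
  have GR : forall i j, Good cf x0 rr (fun y => row y i j).
    move=> i j; exact: (Good_mono Hrr0 (Hrow i j)).
  have GC : forall i k, Good cf x0 rr (fun y => cGS (row y) i k).
    move=> i k; case: (ltngtP k i) => Hki.
    + apply: (Good_ext (f := fun y => dot (jhat (row y) k) (row y i))).
        by move=> y; rewrite cGS_lt.
      by apply: Good_dot.
    + apply: (Good_ext (f := fun _ => 0)); last exact: Good_const.
      by move=> y; rewrite cGS_gt.
    + rewrite Hki; case Hi : (i < m)%N.
        apply: (Good_ext (f := fun y => norm (vGS (row y) i))); first by move=> y; rewrite cGS_diag.
        exact: (GS_norm_good Hrow HC Hi).
      apply: (Good_ext (f := fun _ => 0)); last exact: Good_const.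
      move=> y; rewrite cdiag_zero //; apply: Hrow0; by rewrite leqNgt Hi.
  exists (rr / 2); split; first lra.
  move=> x Hx a Ha.
  apply: (Good_reg (cf := cf) (x0 := x0) (r0 := rr)) => //.
  move=> [p1 p2] /=.
  rewrite /CJ_block /rsum /=.
  apply: (@Good_big _ _ _ _ _ _ _ (fun (k : 'I_(blk_size ms a)) y => cGS (rows_of (J y)) (blk_off ms a + p1) (blk_off ms a + k) *
             jhat (rows_of (J y)) (blk_off ms a + k) p2)) => k _.
  apply: Good_mul; [exact: GC | exact: GJ].
Qed.
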